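(* Let $f'=(f'_n):B\to B$ be a strict $A_\infty$-isomorphism from Polishchuk's structure $(m_n)$ with $f'_1=\mathrm{id}_B$, $f'_2=f'_4=f'_5=\cdots=0$, such that the transferred structure $f'*m$ satisfies $(f'*m)_4=0$ and $(f'*m)_{2k+1}=0$ for all $k\ge0$. Then $m'_6-(f'*m)_6$ and $m'_8-(f'*m)_8$ are Hochschild coboundaries. Consequently the classes $[m'_6]\in HH^6_{(-4)}(B,B)$ and $[m'_8]\in HH^8_{(-6)}(B,B)$ do not depend on the choice of such an isomorphism.
   Context: $B$ is the graded $\mathbb C$-algebra with basis $\mathrm{id}_L,\mathrm{id}_{\mathcal O},\theta$ (degree $0$), $\eta,\xi,\xi_L$ (degree $1$) and only nonzero basis products $\mathrm{id}_L^2=\mathrm{id}_L$, $\mathrm{id}_{\mathcal O}^2=\mathrm{id}_{\mathcal O}$, $\mathrm{id}_L\xi_L=\xi_L\mathrm{id}_L=\xi_L$, $\mathrm{id}_{\mathcal O}\xi=\xi\mathrm{id}_{\mathcal O}=\xi$, $\mathrm{id}_L\eta=\eta\,\mathrm{id}_{\mathcal O}=\eta$, $\mathrm{id}_{\mathcal O}\theta=\theta\,\mathrm{id}_L=\theta$, $\theta\eta=\xi$, $\eta\theta=\xi_L$; $R=\langle\mathrm{id}_L,\mathrm{id}_{\mathcal O}\rangle$, $B_+=\langle\theta,\eta,\xi,\xi_L\rangle$; cochains are $R$-bimodule maps on $B_+^{\otimes_R n}$; Hochschild differential $\delta(\phi)(a_0,\dots,a_n)=a_0\phi(a_1,\dots,a_n)+\sum_{i=1}^n(-1)^i\phi(\dots,a_{i-1}a_i,\dots)+(-1)^{n+1}\phi(a_0,\dots,a_{n-1})a_n$.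 With $t=\operatorname{Im}\tau/\pi$, the Eisenstein-type numbers $g_{a,b}$ of the lattice $\mathbb Z+\tau\mathbb Z$ (defined by $f_{m,n}=(\pi/\operatorname{Im}\tau)^m\sum_{\omega\ne0}\bar\omega^m\omega^{-n}e^{-\pi|\omega|^2/\operatorname{Im}\tau}$, $g_{a,b}=\sum_{k\ge0}k!(\binom ak+\binom bk)f_{a+b-k,k+1}$ for $a\not\equiv b$ mod 2, $0$ otherwise) and $M(a,b,c,d)=(-1)^{\binom{a+b+c+d+1}{2}}\frac{t^{a+b+c+d+1}}{a!b!c!d!}g_{a+c,b+d}$, Polishchuk's structure $(m_n)$ has $m_1=0$, $m_2$ the product, and for $n\ge3$ its only nonzero values on length-$n$ basis words are $m_n(\xi^a\theta\xi_L^b\eta\xi^c\theta\xi_L^d)=M(a,b,c,d)\theta$, $m_n(\xi_L^a\eta\xi^b\theta\xi_L^c\eta\xi^d)=M(a,b,c,d)\eta$, $m_n(\xi^a\theta\xi_L^b\eta\xi^c\theta\xi_L^d\eta\xi^e)=M(a+e+1,b,c,d)\mathrm{id}_{\mathcal O}$, $m_n(\xi_L^a\eta\xi^b\theta\xi_L^c\eta\xi^d\theta\xi_L^e)=M(a+e+1,b,c,d)\mathrm{id}_L$ (words written without $\otimes$; odd $m_n$ vanish). $(m'_n)$ is the structure obtained from $(m_n)$ by the specific strict isomorphism $f=(\mathrm{id},0,f_3,0,\dots)$ with $f_3=M(1,0,0,0)[([\eta\xi\xi]^*-[\xi_L\xi_L\eta]^*-[\xi_L\eta\xi]^* )\otimes\eta+([\theta\xi_L\xi_L]^*-[\xi\xi\theta]^*-[\xi\theta\xi_L]^*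 )\otimes\theta+([\xi\theta\eta]^*+[\theta\xi_L\eta]^*-[\theta\eta\xi]^* )\otimes\mathrm{id}_{\mathcal O}+([\xi_L\eta\theta]^*+[\eta\xi\theta]^*-[\eta\theta\xi_L]^* )\otimes\mathrm{id}_L]$ ($[u]^*\otimes y$ sends the basis word $u$ to $y$ and all other basis words to $0$); it has $m'_4=0$, all odd $m'_k=0$, and $m'_6,m'_8$ Hochschild cocycles. For a strict isomorphism $g$, $g*m$ denotes the unique $A_\infty$-structure making $g:(B,m)\to(B,g*m)$ an $A_\infty$-morphism. *)

(* Defs.v *)
From Stdlib Require Import Reals List Arith ZArith.
Import ListNotations.
Open Scope R_scope.

Record Cx := mkC { Cre : R; Cim : R }.
Definition C0 : Cx := mkC 0 0.
Definition C1 : Cx := mkC 1 0.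
Definition RC (x : R) : Cx := mkC x 0.
Definition Cadd (z w : Cx) : Cx := mkC (Cre z + Cre w) (Cim z + Cim w).
Definition Cmul (z w : Cx) : Cx :=
  mkC (Cre z * Cre w - Cim z * Cim w) (Cre z * Cim w + Cim z * Cre w).
Definition Copp (z : Cx) : Cx := mkC (- Cre z) (- Cim z).
Definition Csub (z w : Cx) : Cx := Cadd z (Copp w).
Definition Cconj (z : Cx) : Cx := mkC (Cre z) (- Cim z).
Definition Cnorm2 (z : Cx) : R := Cre z * Cre z + Cim z * Cim z.
Definition Cinv (z : Cx) : Cx := mkC (Cre z / Cnorm2 z) (- Cim z / Cnorm2 z).
Fixpoint Cpow (z : Cx) (n : nat) : Cx :=
  match n with O => C1 | S k => Cmul z (Cpow z k) end.
Definition Csum (l : list Cx) : Cx := fold_right Cadd C0 l.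
Definition Csign (k : nat) : Cx := if Nat.even k then C1 else Copp C1.

Fixpoint binom (n k : nat) : nat :=
  match n, k with
  | _, O => 1
  | O, S _ => 0
  | S n', S k' => (binom n' k' + binom n' k)%nat
  end.

(* Eisenstein-type numbers of the lattice Z + tau Z, tau = tr + i ti, ti > 0 *)

Definition lat_term (tr ti : R) (m n : nat) (p q : R) : Cx :=
  let w := mkC (p + q * tr) (q * ti) in
  Cmul (Cmul (Cpow (Cconj w) m) (Cpow (Cinv w) n))
       (RC (exp (- PI * Cnorm2 w / ti))).

(* partial sum over the square |p|,|q| <= N, omitting w = 0 *)
Definition lat_partial (tr ti : R) (m n N : nat) : Cx :=
  Csum (flat_map (fun i => map (fun j =>
          if (Nat.eqb i N && Nat.eqb j N)%bool then C0
          else lat_term tr ti m n (INR i - INR N) (INR j - INR N))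
        (seq 0 (2 * N + 1))) (seq 0 (2 * N + 1))).

Definition is_lattice_sum (tr ti : R) (m n : nat) (z : Cx) : Prop :=
  Un_cv (fun N => Cre (lat_partial tr ti m n N)) (Cre z) /\
  Un_cv (fun N => Cim (lat_partial tr ti m n N)) (Cim z).

Section Constants.
(* ti = Im tau; S m n = the lattice sum above *)
Variables (ti : R) (S : nat -> nat -> Cx).

Definition f_mn (m n : nat) : Cx := Cmul (RC ((PI / ti) ^ m)) (S m n).

Definition g_ab (a b : nat) : Cx :=
  if Nat.even (a + b) then C0 else
  Csum (map (fun k => Cmul (RC (INR (fact k) * INR (binom a k + binom b k)))
                          (f_mn (a + b - k) (k + 1)))
            (seq 0 (a + b + 1))).
(* (terms with k > a + b vanish since both binomials vanish) *)

Definition tpar : R := ti / PI.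

Definition Mc (a b c d : nat) : Cx :=
  let s := (a + b + c + d)%nat in
  Cmul (Csign (binom (s + 1) 2))
    (Cmul (RC (tpar ^ (s + 1) / INR (fact a * fact b * fact c * fact d)))
          (g_ab (a + c) (b + d))).
End Constants.

Inductive pl := Th | Et | Xi | XiL.   (* basis of B_+ : theta, eta, xi, xi_L *)
Inductive bb := IdL | IdO | P (x : pl).
Inductive obj := oL | oO.

Definition pl_eqb (x y : pl) : bool :=
  match x, y with
  | Th, Th | Et, Et | Xi, Xi | XiL, XiL => true | _, _ => false end.
Definition bb_eqb (x y : bb) : bool :=
  match x, y with
  | IdL, IdL | IdO, IdO => true | P a, P b => pl_eqb a b | _, _ => false end.
Fixpoint word_eqb (u v : list pl) : bool :=
  match u, v with
  | [], [] => true
  | x :: u', y :: v' => (pl_eqb x y && word_eqb u' v')%bool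
  | _, _ => false end.
Definition obj_eqb (x y : obj) : bool :=
  match x, y with oL, oL | oO, oO => true | _, _ => false end.

(* e_left * b * e_right = b *)
Definition lft (b : bb) : obj :=
  match b with IdL => oL | IdO => oO | P Th => oO | P Et => oL
  | P Xi => oO | P XiL => oL end.
Definition rgt (b : bb) : obj :=
  match b with IdL => oL | IdO => oO | P Th => oL | P Et => oO
  | P Xi => oO | P XiL => oL end.

Definition dg (x : pl) : nat := match x with Th => 0 | _ => 1 end.
Definition degb (b : bb) : Z := match b with P x => Z.of_nat (dg x) | _ => 0%Z end.
Definition degsum (w : list pl) : nat := fold_right (fun x s => (dg x + s)%nat) 0%nat w.

Definition bmul (x y : bb) : option bb :=
  match x, y with
  | IdL, IdL => Some IdL | IdO, IdO => Some IdO
  | IdL, P XiL => Some (P XiL) | P XiL, IdL => Some (P XiL)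
  | IdO, P Xi => Some (P Xi) | P Xi, IdO => Some (P Xi)
  | IdL, P Et => Some (P Et) | P Et, IdO => Some (P Et)
  | IdO, P Th => Some (P Th) | P Th, IdL => Some (P Th)
  | P Th, P Et => Some (P Xi) | P Et, P Th => Some (P XiL)
  | _, _ => None end.

Definition bbs : list bb := [IdL; IdO; P Th; P Et; P Xi; P XiL].
Definition pls : list pl := [Th; Et; Xi; XiL].

Definition vec := bb -> Cx.
Definition vzero : vec := fun _ => C0.
Definition vadd (v w : vec) : vec := fun c => Cadd (v c) (w c).
Definition vscale (z : Cx) (v : vec) : vec := fun c => Cmul z (v c).
Definition vsum (l : list vec) : vec := fold_right vadd vzero l.
Definition bv (b : bb) : vec := fun c => if bb_eqb b c then C1 else C0.
Definition inj (x : pl) : vec := bv (P x).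

Definition vmul (v w : vec) : vec := fun c =>
  Csum (flat_map (fun a => map (fun b =>
     match bmul a b with
     | Some d => if bb_eqb d c then Cmul (v a) (w b) else C0
     | None => C0 end) bbs) bbs).

(* Cochains: R-bimodule maps on B_+^{(x)_R n}.  B_+^{(x)_R n} has as basis
   the composable words of basis letters of B_+; a cochain is given by its
   values on basis words (values on non-composable words are irrelevant). *)
Fixpoint composable (w : list pl) : bool :=
  match w with
  | x :: ((y :: _) as w') => (obj_eqb (rgt (P x)) (lft (P y)) && composable w')%bool
  | _ => true end.

Fixpoint words (k : nat) : list (list pl) :=
  match k with
  | O => [[]]
  | S k' => flat_map (fun w => map (fun x => x :: w) pls) (words k') end.

Definition cochain := list pl -> vec.

Fixpoint coef (vs : list vec) (w : list pl) : Cx :=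
  match vs, w with
  | [], [] => C1
  | v :: vs', x :: w' => Cmul (v (P x)) (coef vs' w')
  | _, _ => C0 end.

(* multilinear evaluation of a cochain on elements of B; components along
   R = <id_L, id_O> are killed (normalized/strictly unital cochains) *)
Definition eval (phi : cochain) (vs : list vec) : vec := fun c =>
  Csum (map (fun w => Cmul (coef vs w) (phi w c))
            (filter composable (words (length vs)))).

Definition bimod (phi : cochain) : Prop :=
  forall (x : pl) (w : list pl) (c : bb), composable (x :: w) = true ->
    phi (x :: w) c <> C0 ->
    lft c = lft (P x) /\ rgt c = rgt (P (last w x)).

Definition homog (phi : cochain) (d : Z) : Prop :=
  forall (w : list pl) (c : bb), composable w = true -> phi w c <> C0 ->
    degb c = (Z.of_nat (degsum w) + d)%Z.

Definition hoch (phi : cochain) (w : list pl) : vec :=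
  let n := (length w - 1)%nat in
  let iw := map inj w in
  vsum ([vmul (nth 0 iw vzero) (eval phi (tl iw))] ++
        map (fun i => vscale (Csign i)
               (eval phi (firstn (i - 1) iw ++
                          [vmul (nth (i - 1) iw vzero) (nth i iw vzero)] ++
                          skipn (i + 1) iw)))
            (seq 1 n) ++
        [vscale (Csign (n + 1)) (vmul (eval phi (removelast iw)) (last iw vzero))]).

Definition coboundary (n : nat) (chi : cochain) : Prop :=
  exists psi : cochain, bimod psi /\ homog psi (2 - Z.of_nat n)%Z /\
    forall w c, composable w = true -> length w = n -> chi w c = hoch psi w c.

(* Minimal strictly unital A-infinity structures with m_1 = 0 and m_2 the
   product are encoded by m : nat -> cochain (only m n, n >= 3, is used).
   Strict A-infinity morphisms f with f_1 = id are encoded by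
   f : nat -> cochain (only f n, n >= 2, is used). *)
Definition opM (m : nat -> cochain) (n : nat) (vs : list vec) : vec :=
  match n with
  | O | 1 => vzero
  | 2 => vmul (nth 0 vs vzero) (nth 1 vs vzero)
  | _ => eval (m n) vs end.
Definition opF (f : nat -> cochain) (n : nat) (vs : list vec) : vec :=
  match n with
  | 1 => nth 0 vs vzero
  | _ => eval (f n) vs end.

Fixpoint comps_aux (fuel n : nat) : list (list nat) :=
  match fuel with
  | O => if Nat.eqb n 0 then [[]] else []
  | S fu => if Nat.eqb n 0 then [[]] else
      flat_map (fun i => map (cons i) (comps_aux fu (n - i))) (seq 1 n) end.
Definition comps (n : nat) : list (list nat) := comps_aux n n.

Fixpoint blocks (comp : list nat) (w : list pl) : list (list pl) :=
  match comp with [] => [] | i :: c => firstn i w :: blocks c (skipn i w) end.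

(* sign exponent of  m'_q (f_{i_1} (x) ... (x) f_{i_q})  applied to the basis
   word w: Keller's  sum_j (q-j)(i_j-1)  plus the Koszul sign of passing
   f_{i_j} (degree 1 - i_j) over the preceding inputs; D = degree so far *)
Fixpoint mor_exp (comp : list nat) (w : list pl) (D : nat) : nat :=
  match comp with
  | [] => 0
  | i :: c => (length c * (i - 1) + (i - 1) * D +
               mor_exp c (skipn i w) (D + degsum (firstn i w)))%nat end.

(* sum_{r+s+t=n} (-1)^{r+st} f_{r+1+t}(1^r (x) m_s (x) 1^t) on the word w
   (with the Koszul sign of m_s, degree 2 - s, passing the first r inputs) *)
Definition mor_lhs (m f : nat -> cochain) (w : list pl) : vec :=
  let n := length w in
  vsum (flat_map (fun s => map (fun r =>
          let t := (n - r - s)%nat in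
          vscale (Csign (r + s * t + s * degsum (firstn r w)))
            (opF f (r + 1 + t)
               (map inj (firstn r w) ++
                [opM m s (map inj (firstn s (skipn r w)))] ++
                map inj (skipn (r + s) w))))
        (seq 0 (n - s + 1))) (seq 1 n)).

Definition mor_rhs (f m' : nat -> cochain) (w : list pl) : vec :=
  vsum (map (fun comp =>
          vscale (Csign (mor_exp comp w 0))
            (opM m' (length comp)
               (map (fun ij => opF f (fst ij) (map inj (snd ij)))
                    (combine comp (blocks comp w)))))
        (comps (length w))).

(* f : (B, m) -> (B, m') is an A-infinity morphism (Keller's sign conventions;
   tested on basis words of B_+^{(x)_R n}, n >= 1) *)
Definition is_morphism (m f m' : nat -> cochain) : Prop :=
  forall (w : list pl) (c : bb), composable w = true -> (1 <= length w)%nat ->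
    mor_lhs m f w c = mor_rhs f m' w c.

Definition strict3 (f3 : cochain) : nat -> cochain :=
  fun n => if Nat.eqb n 3 then f3 else (fun _ => vzero).

Definition rep (x : pl) (k : nat) : list pl := repeat x k.
Definition word1 a b c d :=
  rep Xi a ++ [Th] ++ rep XiL b ++ [Et] ++ rep Xi c ++ [Th] ++ rep XiL d.
Definition word2 a b c d :=
  rep XiL a ++ [Et] ++ rep Xi b ++ [Th] ++ rep XiL c ++ [Et] ++ rep Xi d.
Definition word3 a b c d e :=
  rep Xi a ++ [Th] ++ rep XiL b ++ [Et] ++ rep Xi c ++ [Th] ++ rep XiL d
  ++ [Et] ++ rep Xi e.
Definition word4 a b c d e :=
  rep XiL a ++ [Et] ++ rep Xi b ++ [Th] ++ rep XiL c ++ [Et] ++ rep Xi d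
  ++ [Th] ++ rep XiL e.

Definition tuples4 (n : nat) : list (nat * nat * nat * nat) :=
  flat_map (fun a => flat_map (fun b => flat_map (fun c => map (fun d => (a, b, c, d))
    (seq 0 (n + 1))) (seq 0 (n + 1))) (seq 0 (n + 1))) (seq 0 (n + 1)).
Definition tuples5 (n : nat) : list (nat * nat * nat * nat * nat) :=
  flat_map (fun t => map (fun e => (t, e)) (seq 0 (n + 1))) (tuples4 n).

Definition polishchuk (ti : R) (S : nat -> nat -> Cx) : nat -> cochain :=
  fun n w =>
  if Nat.ltb n 3 then vzero else
  vsum (map (fun '(a, b, c, d) =>
          if Nat.eqb (a + b + c + d + 3) n then
            vadd (if word_eqb w (word1 a b c d)
                  then vscale (Mc ti S a b c d) (bv (P Th)) else vzero)
                 (if word_eqb w (word2 a b c d)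
                  then vscale (Mc ti S a b c d) (bv (P Et)) else vzero)
          else vzero) (tuples4 n)
      ++ map (fun '(a, b, c, d, e) =>
          if Nat.eqb (a + b + c + d + e + 4) n then
            vadd (if word_eqb w (word3 a b c d e)
                  then vscale (Mc ti S (a + e + 1) b c d) (bv IdO) else vzero)
                 (if word_eqb w (word4 a b c d e)
                  then vscale (Mc ti S (a + e + 1) b c d) (bv IdL) else vzero)
          else vzero) (tuples5 n)).

Definition f3ctx (ti : R) (S : nat -> nat -> Cx) : cochain := fun w =>
  vscale (Mc ti S 1 0 0 0)
  (match w with
   | [Et; Xi; Xi] => bv (P Et)
   | [XiL; XiL; Et] => vscale (Copp C1) (bv (P Et))
   | [XiL; Et; Xi] => vscale (Copp C1) (bv (P Et))
   | [Th; XiL; XiL] => bv (P Th)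
   | [Xi; Xi; Th] => vscale (Copp C1) (bv (P Th))
   | [Xi; Th; XiL] => vscale (Copp C1) (bv (P Th))
   | [Xi; Th; Et] => bv IdO
   | [Th; XiL; Et] => bv IdO
   | [Th; Et; Xi] => vscale (Copp C1) (bv IdO)
   | [XiL; Et; Th] => bv IdL
   | [Et; Xi; Th] => bv IdL
   | [Et; Th; XiL] => vscale (Copp C1) (bv IdL)
   | _ => vzero end).

(* Main.v *)
Require Import Defs.
From Stdlib Require Import Reals List Arith ZArith Ring_polynom QArith Qreals Lia Lra.
From Stdlib Require Import FunctionalExtensionality Classical.
Import ListNotations.
Require Import Defs.
Open Scope R_scope.

Lemma Cx_ext : forall a b c d, a = c -> b = d -> mkC a b = mkC c d.
Proof. intros; subst; reflexivity. Qed.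

Lemma Cx_ring : ring_theory C0 C1 Cadd Cmul Csub Copp (@eq Cx).
Proof.
  constructor; intros;
  repeat match goal with z : Cx |- _ => destruct z end;
  unfold C0, C1, Cadd, Cmul, Csub, Copp; simpl; apply Cx_ext; simpl; ring.
Qed.
Add Ring CxRing : Cx_ring.

Definition Qphi (q : Q) : Cx := RC (Q2R q).
Definition qadd x y := Qred (Qplus x y).
Definition qmul x y := Qred (Qmult x y).
Definition qsub x y := Qred (Qminus x y).
Definition qopp x := Qopp x.

Lemma RC_add x y : RC (x + y) = Cadd (RC x) (RC y).
Proof. unfold RC, Cadd; simpl; apply Cx_ext; ring. Qed.
Lemma RC_mul x y : RC (x * y) = Cmul (RC x) (RC y).
Proof. unfold RC, Cmul; simpl; apply Cx_ext; ring. Qed.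
Lemma RC_opp x : RC (- x) = Copp (RC x).
Proof. unfold RC, Copp; simpl; apply Cx_ext; ring. Qed.

Lemma Qmorph : ring_morph C0 C1 Cadd Cmul Csub Copp (@eq Cx)
  0%Q 1%Q qadd qmul qsub qopp Qeq_bool Qphi.
Proof.
  constructor; intros; unfold Qphi, qadd, qmul, qsub, qopp.
  - unfold RC, C0, Q2R; simpl; apply Cx_ext; field.
  - unfold RC, C1, Q2R; simpl; apply Cx_ext; field.
  - rewrite (Qeq_eqR _ _ (Qred_correct _)), Q2R_plus, RC_add; reflexivity.
  - rewrite (Qeq_eqR _ _ (Qred_correct _)), Q2R_minus. unfold Rminus, Csub.
    rewrite RC_add, RC_opp; reflexivity.
  - rewrite (Qeq_eqR _ _ (Qred_correct _)), Q2R_mult, RC_mul; reflexivity.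
  - rewrite Q2R_opp, RC_opp; reflexivity.
  - apply Qeq_bool_eq in H. rewrite (Qeq_eqR _ _ H); reflexivity.
Qed.

Definition Cx_ARth := Rth_ARth (Eqsth Cx) (Eq_ext Cadd Cmul Copp) Cx_ring.

Definition sc := Pol Q.
Definition szero : sc := Pc 0%Q.
Definition sone : sc := Pc 1%Q.
Definition sconst (q : Q) : sc := Pc q.
Definition sadd (p q : sc) : sc := Padd 0%Q qadd Qeq_bool p q.
Definition smul (p q : sc) : sc := Pmul 0%Q 1%Q qadd qmul Qeq_bool p q.
Definition ssub (p q : sc) : sc := Psub 0%Q qadd qsub qopp Qeq_bool p q.
Definition satom (i : positive) : sc := mk_X 0%Q 1%Q i.
Definition sden (env : list Cx) (p : sc) : Cx := Pphi C0 Cadd Cmul Qphi env p.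
Definition seqb (p q : sc) : bool := Peq Qeq_bool p q.
Definition siszero (p : sc) : bool := match p with Pc c => Qeq_bool c 0 | _ => false end.

Section Den.
Variable env : list Cx.
Lemma sden_add p q : sden env (sadd p q) = Cadd (sden env p) (sden env q).
Proof. exact (Padd_ok (Eqsth Cx) (Eq_ext Cadd Cmul Copp) Cx_ARth Qmorph q p env). Qed.
Lemma sden_mul p q : sden env (smul p q) = Cmul (sden env p) (sden env q).
Proof. exact (Pmul_ok (Eqsth Cx) (Eq_ext Cadd Cmul Copp) Cx_ARth Qmorph p q env). Qed.
Lemma sden_sub p q : sden env (ssub p q) = Csub (sden env p) (sden env q).
Proof. exact (Psub_ok (Eqsth Cx) (Eq_ext Cadd Cmul Copp) Cx_ARth Qmorph q p env). Qed.
Lemma sden_atom i : sden env (satom i) = BinList.nth C0 i env.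
Proof. symmetry; exact (mkX_ok (Eqsth Cx) (Eq_ext Cadd Cmul Copp) Cx_ARth Qmorph i env). Qed.
Lemma sden_const q : sden env (sconst q) = Qphi q.
Proof. reflexivity. Qed.
Lemma sden_zero : sden env szero = C0.
Proof. unfold sden, szero; simpl. unfold Qphi, RC, C0, Q2R; simpl; apply Cx_ext; field. Qed.
Lemma sden_one : sden env sone = C1.
Proof. unfold sden, sone; simpl. unfold Qphi, RC, C1, Q2R; simpl; apply Cx_ext; field. Qed.
Lemma sden_eqb p q : seqb p q = true -> sden env p = sden env q.
Proof. intro H. exact (Peq_ok (Eqsth Cx) (Eq_ext Cadd Cmul Copp) Qmorph p q H env). Qed.
Lemma sden_iszero p : siszero p = true -> sden env p = C0.
Proof. destruct p; simpl; try discriminate. intro H. apply Qeq_bool_eq in H.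
  unfold sden; simpl. unfold Qphi. rewrite (Qeq_eqR _ _ H). unfold RC, C0, Q2R; simpl; apply Cx_ext; field. Qed.
End Den.

Record sv := SV { sIdL : sc; sIdO : sc; sTh : sc; sEt : sc; sXi : sc; sXiL : sc }.
Definition sget (v : sv) (c : bb) : sc :=
  match c with IdL => sIdL v | IdO => sIdO v | P Th => sTh v | P Et => sEt v
  | P Xi => sXi v | P XiL => sXiL v end.
Definition smk (f : bb -> sc) : sv :=
  SV (f IdL) (f IdO) (f (P Th)) (f (P Et)) (f (P Xi)) (f (P XiL)).
Lemma sget_mk f c : sget (smk f) c = f c.
Proof. destruct c as [| |[]]; reflexivity. Qed.

Definition svzero : sv := smk (fun _ => szero).
Definition svadd (v w : sv) : sv := smk (fun c => sadd (sget v c) (sget w c)).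
Definition svsub (v w : sv) : sv := smk (fun c => ssub (sget v c) (sget w c)).
Definition svscale (p : sc) (v : sv) : sv := smk (fun c => smul p (sget v c)).
Definition svsum (l : list sv) : sv := fold_right svadd svzero l.
Definition sbv (b : bb) : sv := smk (fun c => if bb_eqb b c then sone else szero).
Definition sinj (x : pl) : sv := sbv (P x).
Definition svmul (v w : sv) : sv :=
  let g := sget v in let h := sget w in
  SV (smul (g IdL) (h IdL)) (smul (g IdO) (h IdO))
     (sadd (smul (g IdO) (h (P Th))) (smul (g (P Th)) (h IdL)))
     (sadd (smul (g IdL) (h (P Et))) (smul (g (P Et)) (h IdO)))
     (sadd (sadd (smul (g IdO) (h (P Xi))) (smul (g (P Xi)) (h IdO))) (smul (g (P Th)) (h (P Et))))
     (sadd (sadd (smul (g IdL) (h (P XiL))) (smul (g (P XiL)) (h IdL))) (smul (g (P Et)) (h (P Th)))).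

Section VDen.
Variable env : list Cx.
Definition vden (v : sv) : vec := fun c => sden env (sget v c).

Lemma vden_zero : vden svzero = vzero.
Proof. extensionality c. unfold vden, svzero. rewrite sget_mk, sden_zero; reflexivity. Qed.
Lemma vden_add v w : vden (svadd v w) = vadd (vden v) (vden w).
Proof. extensionality c. unfold vden, svadd, vadd. rewrite sget_mk, sden_add; reflexivity. Qed.
Lemma vden_sub v w c : vden (svsub v w) c = Csub (vden v c) (vden w c).
Proof. unfold vden, svsub. rewrite sget_mk, sden_sub; reflexivity. Qed.
Lemma vden_scale p v : vden (svscale p v) = vscale (sden env p) (vden v).
Proof. extensionality c. unfold vden, svscale, vscale. rewrite sget_mk, sden_mul; reflexivity. Qed.
Lemma vden_sum l : vden (svsum l) = vsum (map vden l).
Proof. induction l; simpl. apply vden_zero. rewrite vden_add, IHl; reflexivity. Qed.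
Lemma vden_bv b : vden (sbv b) = bv b.
Proof. extensionality c. unfold vden, sbv, bv. rewrite sget_mk.
  destruct (bb_eqb b c). apply sden_one. apply sden_zero. Qed.
Lemma vden_inj x : vden (sinj x) = inj x.
Proof. apply vden_bv. Qed.
Lemma vden_mul v w : vden (svmul v w) = vmul (vden v) (vden w).
Proof.
  extensionality c. unfold vmul.
  destruct c as [| |[]]; unfold vden, svmul; simpl sget; rewrite ?sden_add, ?sden_mul;
  cbn [Csum flat_map map bbs bmul bb_eqb pl_eqb app fold_right sget]; ring.
Qed.
End VDen.

Definition Ereal (k : list pl -> vec) (vs : list vec) (c : bb) : Cx :=
  Csum (map (fun w => Cmul (coef vs w) (k w c)) (words (length vs))).

Lemma eval_E phi vs c :
  eval phi vs c = Ereal (fun w => if composable w then phi w else vzero) vs c.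
Proof.
  unfold eval, Ereal. induction (words (length vs)) as [|w ws IH]; simpl. reflexivity.
  destruct (composable w); simpl; rewrite IH. reflexivity. unfold vzero; ring.
Qed.

Lemma Csum_app l1 l2 : Csum (l1 ++ l2) = Cadd (Csum l1) (Csum l2).
Proof. induction l1; simpl. ring. rewrite IHl1; ring. Qed.

Lemma E_nil k c : Ereal k [] c = k [] c.
Proof. unfold Ereal; simpl. ring. Qed.

Lemma E_cons k v vs c :
  Ereal k (v :: vs) c =
  Csum (map (fun x => Cmul (v (P x)) (Ereal (fun w => k (x :: w)) vs c)) pls).
Proof.
  unfold Ereal. cbn [length words]. generalize (words (length vs)) as ws.
  induction ws as [|w ws IH]. simpl; ring.
  cbn [flat_map]. rewrite map_app, Csum_app, IH. cbn [pls map coef]. unfold Csum; cbn [fold_right]. ring.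
Qed.

Lemma E_inj k w c : Ereal k (map inj w) c = k w c.
Proof.
  revert k; induction w as [|x w IH]; intro k. apply E_nil.
  simpl map. rewrite E_cons. simpl. rewrite !IH.
  unfold inj, bv. destruct x; simpl; ring.
Qed.

Lemma eval_inj phi w c : composable w = true -> eval phi (map inj w) c = phi w c.
Proof. intro H. rewrite eval_E, E_inj, H. reflexivity. Qed.

Lemma eval_zero vs c : eval (fun _ => vzero) vs c = C0.
Proof. unfold eval. induction (filter composable (words (length vs))); simpl. reflexivity.
  rewrite IHl. unfold vzero; ring. Qed.

Fixpoint sEv (k : list pl -> sv) (vs : list sv) : sv :=
  match vs with
  | [] => k []
  | v :: vs' => svsum (map (fun x => let a := sget v (P x) in
        if siszero a then svzero else svscale a (sEv (fun w => k (x :: w)) vs')) pls)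
  end.

Lemma sEv_ok env vs : forall k kr, (forall w, length w = length vs -> vden env (k w) = kr w) ->
  forall c, vden env (sEv k vs) c = Ereal kr (map (vden env) vs) c.
Proof.
  induction vs as [|v vs IH]; intros k kr H c.
  - simpl. rewrite E_nil, H; reflexivity.
  - simpl map. rewrite E_cons. change (sEv k (v :: vs)) with (svsum (map (fun x => let a := sget v (P x) in
        if siszero a then svzero else svscale a (sEv (fun w => k (x :: w)) vs)) pls)).
    rewrite vden_sum.
    assert (G : forall x, vden env (let a := sget v (P x) in
        if siszero a then svzero else svscale a (sEv (fun w => k (x :: w)) vs)) c
        = Cmul (vden env v (P x)) (Ereal (fun w => kr (x :: w)) (map (vden env) vs) c)).
    { intro x. cbv zeta. destruct (siszero (sget v (P x))) eqn:E.
      - rewrite vden_zero. change (vden env v (P x)) with (sden env (sget v (P x))). rewrite (sden_iszero env _ E). unfold vzero; ring.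
      - rewrite vden_scale. unfold vscale. rewrite (IH (fun w => k (x :: w)) (fun w => kr (x :: w))). reflexivity.
        intros w Hw. apply H. simpl; rewrite Hw; reflexivity. }
    unfold pls. cbn [map vsum fold_right]. unfold vadd. rewrite !G. unfold vzero, Csum. cbn [map fold_right]. ring.
Qed.

Definition seval (sphi : list pl -> sv) (vs : list sv) : sv :=
  sEv (fun w => if composable w then sphi w else svzero) vs.

Lemma seval_ok env sphi phi vs :
  (forall w, composable w = true -> length w = length vs -> vden env (sphi w) = phi w) ->
  forall c, vden env (seval sphi vs) c = eval phi (map (vden env) vs) c.
Proof.
  intros H c. rewrite eval_E. unfold seval. apply sEv_ok.
  intros w Hw. destruct (composable w) eqn:E. apply H; auto. apply vden_zero.
Qed.

Definition ssign (k : nat) : sc := if Nat.even k then sone else sconst (-1)%Q.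
Lemma sden_sign env k : sden env (ssign k) = Csign k.
Proof. unfold ssign, Csign. destruct (Nat.even k). apply sden_one.
  rewrite sden_const. unfold Qphi, RC, Copp, C1, Q2R; simpl; apply Cx_ext; field. Qed.

Definition sopM (sm : nat -> list pl -> sv) (n : nat) (vs : list sv) : sv :=
  match n with O | 1%nat => svzero | 2%nat => svmul (nth 0 vs svzero) (nth 1 vs svzero)
  | _ => seval (sm n) vs end.
Definition sopF (sf : nat -> list pl -> sv) (n : nat) (vs : list sv) : sv :=
  match n with 1%nat => nth 0 vs svzero | _ => seval (sf n) vs end.

Lemma map_vden_nth env vs i : nth i (map (vden env) vs) vzero = vden env (nth i vs svzero).
Proof. rewrite <- (vden_zero env), map_nth; reflexivity. Qed.

Lemma sopM_ok env sm m n vs :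
  (3 <= n)%nat -> (forall w, composable w = true -> length w = length vs -> vden env (sm n w) = m n w) ->
  vden env (sopM sm n vs) = opM m n (map (vden env) vs).
Proof.
  intros Hn H. destruct n as [|[|[|n]]]; try lia.
  extensionality c. apply seval_ok. exact H.
Qed.
Lemma sopM_ok' env sm m n vs :
  (forall w, (3 <= n)%nat -> composable w = true -> length w = length vs -> vden env (sm n w) = m n w) ->
  vden env (sopM sm n vs) = opM m n (map (vden env) vs).
Proof.
  intros H. destruct n as [|[|[|n]]].
  - apply vden_zero. - apply vden_zero.
  - simpl. rewrite vden_mul, !map_vden_nth; reflexivity.
  - apply sopM_ok. lia. intros; apply H; auto; lia.
Qed.
Lemma sopF_ok env sf f n vs :
  (forall w, n <> 1%nat -> composable w = true -> length w = length vs -> vden env (sf n w) = f n w) ->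
  vden env (sopF sf n vs) = opF f n (map (vden env) vs).
Proof.
  intros H. destruct n as [|[|n]]; extensionality c.
  - apply seval_ok; intros; apply H; auto.
  - simpl. rewrite map_vden_nth; reflexivity.
  - apply seval_ok; intros; apply H; auto.
Qed.

Lemma vsum_pt l c : vsum l c = Csum (map (fun v => v c) l).
Proof. induction l; simpl. reflexivity. unfold vadd. rewrite IHl. reflexivity. Qed.
Lemma svsum_pt env l c : vden env (svsum l) c = Csum (map (fun v => vden env v c) l).
Proof. rewrite vden_sum, vsum_pt, map_map. reflexivity. Qed.
Lemma map_flat_map' {A B C} (h : B -> C) (g : A -> list B) l :
  map h (flat_map g l) = flat_map (fun x => map h (g x)) l.
Proof. induction l; simpl. reflexivity. rewrite map_app, IHl; reflexivity. Qed.
Lemma flat_map_ext_in {A B} (g g' : A -> list B) l :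
  (forall x, In x l -> g x = g' x) -> flat_map g l = flat_map g' l.
Proof. induction l; simpl; intros H. reflexivity. rewrite H, IHl; auto. Qed.

Lemma map_sinj env w : map (vden env) (map sinj w) = map inj w.
Proof. rewrite map_map. apply map_ext. intro; apply vden_inj. Qed.

Definition smor_lhs (sm sf : nat -> list pl -> sv) (w : list pl) : sv :=
  let n := length w in
  svsum (flat_map (fun s => map (fun r =>
          let t := (n - r - s)%nat in
          svscale (ssign (r + s * t + s * degsum (firstn r w)))
            (sopF sf (r + 1 + t)
               (map sinj (firstn r w) ++
                [sopM sm s (map sinj (firstn s (skipn r w)))] ++
                map sinj (skipn (r + s) w))))
        (seq 0 (n - s + 1))) (seq 1 n)).

Lemma smor_lhs_ok env sm sf m f w :
  (forall q u, (3 <= q)%nat -> (q <= length w)%nat -> composable u = true -> length u = q ->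
      vden env (sm q u) = m q u) ->
  (forall q u, q <> 1%nat -> composable u = true -> length u = q -> vden env (sf q u) = f q u) ->
  forall c, vden env (smor_lhs sm sf w) c = mor_lhs m f w c.
Proof.
  intros Hm Hf c. unfold smor_lhs, mor_lhs. rewrite svsum_pt, vsum_pt, !map_flat_map'.
  f_equal. apply flat_map_ext_in. intros s Hs. rewrite !map_map. apply map_ext_in.
  intros r Hr. apply in_seq in Hs. apply in_seq in Hr.
  rewrite vden_scale, sden_sign. unfold vscale. f_equal.
  rewrite sopF_ok with (f := f).
  - rewrite !map_app, !map_sinj. simpl. rewrite sopM_ok' with (m := m). rewrite map_sinj. reflexivity.
    intros u H3 Hu Hl. apply Hm; auto. lia. rewrite Hl, length_map, length_firstn, length_skipn. lia.
  - intros u H1 Hu Hl. apply Hf; auto. rewrite Hl. rewrite !length_app, !length_map, length_firstn, length_skipn. simpl. lia.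
Qed.

Fixpoint sumn (l : list nat) : nat := match l with [] => 0 | x :: l => x + sumn l end.

Lemma blocks_len comp : forall w, sumn comp = length w -> forall ij, In ij (combine comp (blocks comp w)) ->
  length (snd ij) = fst ij.
Proof.
  induction comp as [|i c IH]; intros w Hs ij Hin; simpl in *. contradiction.
  destruct Hin as [<-|Hin]. simpl. rewrite length_firstn. lia.
  apply (IH (skipn i w)); auto. rewrite length_skipn. lia.
Qed.
Lemma blocks_length comp w : length (blocks comp w) = length comp.
Proof. revert w; induction comp; simpl; auto. Qed.
Lemma len_le_sum comp : (forall i, In i comp -> (1 <= i)%nat) -> (length comp <= sumn comp)%nat.
Proof. induction comp; simpl; intros H. lia. assert (1 <= a)%nat by auto. assert (length comp <= sumn comp)%nat by auto. lia. Qed.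

Definition smor_rhs (sf sm' : nat -> list pl -> sv) (w : list pl) : sv :=
  svsum (map (fun comp =>
          svscale (ssign (mor_exp comp w 0))
            (sopM sm' (length comp)
               (map (fun ij => sopF sf (fst ij) (map sinj (snd ij)))
                    (combine comp (blocks comp w)))))
        (comps (length w))).

Lemma smor_rhs_ok env sf sm' f m' w :
  (forall comp, In comp (comps (length w)) -> (forall i, In i comp -> (1 <= i)%nat) /\ sumn comp = length w) ->
  (forall q u, (3 <= q)%nat -> (q <= length w)%nat -> composable u = true -> length u = q ->
      vden env (sm' q u) = m' q u) ->
  (forall q u, q <> 1%nat -> composable u = true -> length u = q -> vden env (sf q u) = f q u) ->
  forall c, vden env (smor_rhs sf sm' w) c = mor_rhs f m' w c.
Proof.
  intros Hc Hm Hf c. unfold smor_rhs, mor_rhs. rewrite svsum_pt, vsum_pt, !map_map.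
  f_equal. apply map_ext_in. intros comp Hin. destruct (Hc comp Hin) as [H1 H2].
  rewrite vden_scale, sden_sign. unfold vscale. f_equal.
  rewrite sopM_ok' with (m := m').
  - rewrite map_map. f_equal. apply map_ext_in. intros ij Hij.
    rewrite sopF_ok with (f := f). rewrite map_sinj; reflexivity.
    intros u Hn Hu Hl. apply Hf; auto. rewrite Hl, length_map. apply (blocks_len comp w); auto.
  - intros u H3 Hu Hl. apply Hm; auto. pose proof (len_le_sum comp H1). lia.
    rewrite Hl, length_map, length_combine, blocks_length. lia.
Qed.

Lemma removelast_map {A B} (f : A -> B) l : removelast (map f l) = map f (removelast l).
Proof. induction l as [|a [|b l] IH]; simpl; auto. simpl in IH. rewrite IH. reflexivity. Qed.
Lemma last_map {A B} (f : A -> B) l d : last (map f l) (f d) = f (last l d).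
Proof. induction l as [|a [|b l] IH]; simpl; auto. Qed.

Definition shoch (sphi : list pl -> sv) (w : list pl) : sv :=
  let n := (length w - 1)%nat in
  let iw := map sinj w in
  svsum ([svmul (nth 0 iw svzero) (seval sphi (tl iw))] ++
        map (fun i => svscale (ssign i)
               (seval sphi (firstn (i - 1) iw ++
                          [svmul (nth (i - 1) iw svzero) (nth i iw svzero)] ++
                          skipn (i + 1) iw)))
            (seq 1 n) ++
        [svscale (ssign (n + 1)) (svmul (seval sphi (removelast iw)) (last iw svzero))]).

Lemma shoch_ok env sphi phi w :
  (forall u, vden env (sphi u) = phi u) ->
  forall c, vden env (shoch sphi w) c = hoch phi w c.
Proof.
  intros H c.
  assert (He : forall vs, vden env (seval sphi vs) = eval phi (map (vden env) vs)).
  { intro vs. extensionality c'. apply seval_ok. intros; apply H. }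
  unfold shoch, hoch. rewrite vden_sum. rewrite !map_app. simpl map.
  rewrite vden_mul, He, vden_scale, vden_mul, He.
  rewrite <- (map_sinj env w), sden_sign. generalize (map sinj w) as iw; intro iw.
  rewrite map_vden_nth, <- tl_map, removelast_map, <- (vden_zero env), last_map.
  f_equal. f_equal. f_equal. f_equal. rewrite map_map. apply map_ext. intro i.
  rewrite vden_scale, sden_sign, He, !map_app, firstn_map, skipn_map. simpl.
  rewrite vden_mul, !map_nth. reflexivity.
Qed.

Definition flist : list (list pl * bb) :=
  [([Th;Et;Xi],IdO); ([Th;XiL;Et],IdO); ([Th;XiL;XiL],P Th); ([Et;Th;XiL],IdL);
   ([Et;Xi;Th],IdL); ([Et;Xi;Xi],P Et); ([Xi;Th;Et],IdO); ([Xi;Th;XiL],P Th);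
   ([Xi;Xi;Th],P Th); ([Xi;Xi;Xi],P Xi); ([XiL;Et;Th],IdL); ([XiL;Et;Xi],P Et);
   ([XiL;XiL;Et],P Et); ([XiL;XiL;XiL],P XiL)].

Definition mkenv (ti : R) (S : nat -> nat -> Cx) (f3 : cochain) : list Cx :=
  [RC (tpar ti); g_ab ti S 0 1; g_ab ti S 0 3; g_ab ti S 1 2; g_ab ti S 0 5;
   g_ab ti S 1 4; g_ab ti S 2 3] ++ map (fun uc => f3 (fst uc) (snd uc)) flist.

Definition st : sc := satom 1.
Fixpoint spow (p : sc) (n : nat) : sc := match n with O => sone | S k => smul p (spow p k) end.
Definition sG (p q : nat) : sc :=
  if Nat.even (p + q) then szero else
  match Nat.min p q, Nat.max p q with
  | 0%nat, 1%nat => satom 2 | 0%nat, 3%nat => satom 3 | 1%nat, 2%nat => satom 4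
  | 0%nat, 5%nat => satom 5 | 1%nat, 4%nat => satom 6 | 2%nat, 3%nat => satom 7
  | _, _ => szero end.

Definition sMc (a b c d : nat) : sc :=
  let s := (a + b + c + d)%nat in
  smul (ssign (binom (s + 1) 2))
    (smul (smul (sconst (1 # Pos.of_nat (fact a * fact b * fact c * fact d))) (spow st (s + 1)))
          (sG (a + c) (b + d))).

Lemma g_sym ti S a b : g_ab ti S a b = g_ab ti S b a.
Proof.
  unfold g_ab. rewrite (Nat.add_comm b a). destruct (Nat.even (a + b)); auto.
  f_equal. apply map_ext. intro k. rewrite (Nat.add_comm (binom b k)). reflexivity.
Qed.

Section Env.
Variables (ti : R) (Sv : nat -> nat -> Cx) (f3 : cochain).
Let env := mkenv ti Sv f3.

Lemma sden_st : sden env st = RC (tpar ti).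
Proof. unfold st. rewrite sden_atom. reflexivity. Qed.

Lemma sden_pow k : sden env (spow st k) = RC (tpar ti ^ k).
Proof. induction k; simpl spow. rewrite sden_one. unfold RC, C1; simpl; reflexivity.
  rewrite sden_mul, IHk, sden_st, <- RC_mul. reflexivity. Qed.

Lemma sG_ok p q : (p + q <= 5)%nat -> sden env (sG p q) = g_ab ti Sv p q.
Proof.
  intro H. unfold sG. destruct (Nat.even (p + q)) eqn:E.
  - rewrite sden_zero. unfold g_ab. rewrite E. reflexivity.
  - assert (forall x y, (x <= y)%nat -> (x + y <= 5)%nat -> Nat.even (x + y) = false ->
       sden env match x, y with
       | 0%nat, 1%nat => satom 2 | 0%nat, 3%nat => satom 3 | 1%nat, 2%nat => satom 4
       | 0%nat, 5%nat => satom 5 | 1%nat, 4%nat => satom 6 | 2%nat, 3%nat => satom 7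
       | _, _ => szero end = g_ab ti Sv x y) as K.
    { intros x y Hxy Hs He.
      destruct x as [|[|[|[|[|[|x]]]]]]; destruct y as [|[|[|[|[|[|y]]]]]]; try lia;
      try discriminate He; rewrite ?sden_atom; reflexivity. }
    destruct (Nat.le_ge_cases p q).
    + rewrite Nat.min_l, Nat.max_r by lia. apply K; auto.
    + rewrite Nat.min_r, Nat.max_l by lia. rewrite g_sym. apply K; auto. lia.
      rewrite Nat.add_comm; auto.
Qed.

Lemma Q2R_inv_nat n : Q2R (1 # Pos.of_nat (S n)) = / INR (S n).
Proof.
  unfold Q2R. rewrite INR_IZR_INZ.
  change (QDen (1 # Pos.of_nat (S n))) with (Z.pos (Pos.of_nat (S n))).
  rewrite <- Pos.of_nat_succ. change (Z.of_nat (S n)) with (Z.pos (Pos.of_succ_nat n)).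
  simpl Qnum. lra.
Qed.

Lemma sMc_ok a b c d : (a + b + c + d <= 5)%nat -> sden env (sMc a b c d) = Mc ti Sv a b c d.
Proof.
  intro H. unfold sMc, Mc. rewrite !sden_mul, sden_sign, sG_ok by lia. f_equal. f_equal.
  rewrite sden_const, sden_pow. unfold Qphi.
  assert (Hf : (0 < fact a * fact b * fact c * fact d)%nat).
  { pose proof (lt_O_fact a); pose proof (lt_O_fact b); pose proof (lt_O_fact c); pose proof (lt_O_fact d).
    repeat apply Nat.mul_pos_pos; auto. }
  destruct (fact a * fact b * fact c * fact d)%nat as [|N] eqn:EN; [lia|].
  rewrite Q2R_inv_nat. unfold Rdiv. rewrite RC_mul. ring.
Qed.
End Env.

Definition spolish (n : nat) (w : list pl) : sv :=
  if Nat.ltb n 3 then svzero else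
  svsum (map (fun '(a, b, c, d) =>
          if Nat.eqb (a + b + c + d + 3) n then
            svadd (if word_eqb w (word1 a b c d)
                  then svscale (sMc a b c d) (sbv (P Th)) else svzero)
                 (if word_eqb w (word2 a b c d)
                  then svscale (sMc a b c d) (sbv (P Et)) else svzero)
          else svzero) (tuples4 n)
      ++ map (fun '(a, b, c, d, e) =>
          if Nat.eqb (a + b + c + d + e + 4) n then
            svadd (if word_eqb w (word3 a b c d e)
                  then svscale (sMc (a + e + 1) b c d) (sbv IdO) else svzero)
                 (if word_eqb w (word4 a b c d e)
                  then svscale (sMc (a + e + 1) b c d) (sbv IdL) else svzero)
          else svzero) (tuples5 n)).

Lemma spolish_ok ti Sv f3 n w : (n <= 8)%nat ->
  vden (mkenv ti Sv f3) (spolish n w) = polishchuk ti Sv n w.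
Proof.
  intro Hn. unfold spolish, polishchuk. destruct (Nat.ltb n 3). apply vden_zero.
  rewrite vden_sum, map_app, !map_map. f_equal. f_equal.
  - apply map_ext. intros [[[a b] c] d].
    destruct (Nat.eqb (a + b + c + d + 3) n) eqn:E; [|apply vden_zero].
    apply Nat.eqb_eq in E. rewrite vden_add. f_equal.
    + destruct (word_eqb w (word1 a b c d)); [|apply vden_zero].
      rewrite vden_scale, vden_bv, sMc_ok by lia. reflexivity.
    + destruct (word_eqb w (word2 a b c d)); [|apply vden_zero].
      rewrite vden_scale, vden_bv, sMc_ok by lia. reflexivity.
  - apply map_ext. intros [[[[a b] c] d] e].
    destruct (Nat.eqb (a + b + c + d + e + 4) n) eqn:E; [|apply vden_zero].
    apply Nat.eqb_eq in E. rewrite vden_add. f_equal.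
    + destruct (word_eqb w (word3 a b c d e)); [|apply vden_zero].
      rewrite vden_scale, vden_bv, sMc_ok by lia. reflexivity.
    + destruct (word_eqb w (word4 a b c d e)); [|apply vden_zero].
      rewrite vden_scale, vden_bv, sMc_ok by lia. reflexivity.
Qed.


Definition spolish' (n : nat) (w : list pl) : sv :=
  if Nat.ltb n 3 then svzero else
  svsum (map (fun '(a, b, c, d) =>
            svadd (if word_eqb w (word1 a b c d)
                  then svscale (sMc a b c d) (sbv (P Th)) else svzero)
                 (if word_eqb w (word2 a b c d)
                  then svscale (sMc a b c d) (sbv (P Et)) else svzero))
          (filter (fun '(a, b, c, d) => Nat.eqb (a + b + c + d + 3) n) (tuples4 n))
      ++ map (fun '(a, b, c, d, e) =>
            svadd (if word_eqb w (word3 a b c d e)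
                  then svscale (sMc (a + e + 1) b c d) (sbv IdO) else svzero)
                 (if word_eqb w (word4 a b c d e)
                  then svscale (sMc (a + e + 1) b c d) (sbv IdL) else svzero))
          (filter (fun '(a, b, c, d, e) => Nat.eqb (a + b + c + d + e + 4) n) (tuples5 n))).

Lemma vden_sum_filter {A} env (F G : A -> sv) (p : A -> bool) l :
  (forall x, p x = true -> F x = G x) -> (forall x, p x = false -> F x = svzero) ->
  vden env (svsum (map F l)) = vden env (svsum (map G (filter p l))).
Proof.
  intros H1 H2. induction l as [|x l IH]; simpl. reflexivity.
  destruct (p x) eqn:E; simpl; rewrite !vden_add, IH.
  - rewrite H1; auto.
  - rewrite H2 by auto. rewrite vden_zero. extensionality c. unfold vadd, vzero. ring.
Qed.

Lemma vden_sum_app env l1 l2 : vden env (svsum (l1 ++ l2)) = vadd (vden env (svsum l1)) (vden env (svsum l2)).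
Proof. rewrite !vden_sum, map_app. extensionality c. rewrite !vsum_pt, map_app, Csum_app. unfold vadd. rewrite !vsum_pt. reflexivity. Qed.

Lemma spolish'_ok ti Sv f3 n w : (n <= 8)%nat ->
  vden (mkenv ti Sv f3) (spolish' n w) = polishchuk ti Sv n w.
Proof.
  intro Hn. rewrite <- (spolish_ok ti Sv f3 n w Hn). unfold spolish, spolish'.
  destruct (Nat.ltb n 3). reflexivity.
  assert (E1 : vden (mkenv ti Sv f3) (svsum (map (fun '(a, b, c, d) =>
          if Nat.eqb (a + b + c + d + 3) n then
            svadd (if word_eqb w (word1 a b c d)
                  then svscale (sMc a b c d) (sbv (P Th)) else svzero)
                 (if word_eqb w (word2 a b c d)
                  then svscale (sMc a b c d) (sbv (P Et)) else svzero)
          else svzero) (tuples4 n))) = vden (mkenv ti Sv f3) (svsum (map (fun '(a, b, c, d) =>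
            svadd (if word_eqb w (word1 a b c d)
                  then svscale (sMc a b c d) (sbv (P Th)) else svzero)
                 (if word_eqb w (word2 a b c d)
                  then svscale (sMc a b c d) (sbv (P Et)) else svzero))
          (filter (fun '(a, b, c, d) => Nat.eqb (a + b + c + d + 3) n) (tuples4 n))))).
  { apply vden_sum_filter; intros [[[a b] c] d] H; rewrite H; reflexivity. }
  assert (E2 : vden (mkenv ti Sv f3) (svsum (map (fun '(a, b, c, d, e) =>
          if Nat.eqb (a + b + c + d + e + 4) n then
            svadd (if word_eqb w (word3 a b c d e)
                  then svscale (sMc (a + e + 1) b c d) (sbv IdO) else svzero)
                 (if word_eqb w (word4 a b c d e)
                  then svscale (sMc (a + e + 1) b c d) (sbv IdL) else svzero)
          else svzero) (tuples5 n))) = vden (mkenv ti Sv f3) (svsum (map (fun '(a, b, c, d, e) =>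
            svadd (if word_eqb w (word3 a b c d e)
                  then svscale (sMc (a + e + 1) b c d) (sbv IdO) else svzero)
                 (if word_eqb w (word4 a b c d e)
                  then svscale (sMc (a + e + 1) b c d) (sbv IdL) else svzero))
          (filter (fun '(a, b, c, d, e) => Nat.eqb (a + b + c + d + e + 4) n) (tuples5 n))))).
  { apply vden_sum_filter; intros [[[[a b] c] d] e] H; rewrite H; reflexivity. }
  rewrite !vden_sum_app, E1, E2. reflexivity.
Qed.

Definition spolish2 (n : nat) : list pl -> sv :=
  if Nat.ltb n 3 then fun _ => svzero else
  let L4 := filter (fun '(a, b, c, d) => Nat.eqb (a + b + c + d + 3) n) (tuples4 n) in
  let L5 := filter (fun '(a, b, c, d, e) => Nat.eqb (a + b + c + d + e + 4) n) (tuples5 n) in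
  fun w =>
  svsum (map (fun '(a, b, c, d) =>
            svadd (if word_eqb w (word1 a b c d)
                  then svscale (sMc a b c d) (sbv (P Th)) else svzero)
                 (if word_eqb w (word2 a b c d)
                  then svscale (sMc a b c d) (sbv (P Et)) else svzero)) L4
      ++ map (fun '(a, b, c, d, e) =>
            svadd (if word_eqb w (word3 a b c d e)
                  then svscale (sMc (a + e + 1) b c d) (sbv IdO) else svzero)
                 (if word_eqb w (word4 a b c d e)
                  then svscale (sMc (a + e + 1) b c d) (sbv IdL) else svzero)) L5).
Lemma spolish2_eq n w : spolish2 n w = spolish' n w.
Proof. unfold spolish2, spolish'. destruct (Nat.ltb n 3); reflexivity. Qed.

Definition sM1000 : sc := sMc 1 0 0 0.
Definition sf3ctx (w : list pl) : sv :=
  svscale sM1000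
  (match w with
   | [Et; Xi; Xi] => sbv (P Et)
   | [XiL; XiL; Et] => svscale (sconst (-1)%Q) (sbv (P Et))
   | [XiL; Et; Xi] => svscale (sconst (-1)%Q) (sbv (P Et))
   | [Th; XiL; XiL] => sbv (P Th)
   | [Xi; Xi; Th] => svscale (sconst (-1)%Q) (sbv (P Th))
   | [Xi; Th; XiL] => svscale (sconst (-1)%Q) (sbv (P Th))
   | [Xi; Th; Et] => sbv IdO
   | [Th; XiL; Et] => sbv IdO
   | [Th; Et; Xi] => svscale (sconst (-1)%Q) (sbv IdO)
   | [XiL; Et; Th] => sbv IdL
   | [Et; Xi; Th] => sbv IdL
   | [Et; Th; XiL] => svscale (sconst (-1)%Q) (sbv IdL)
   | _ => svzero end).

Lemma sden_m1 env : sden env (sconst (-1)%Q) = Copp C1.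
Proof. rewrite sden_const. unfold Qphi, RC, Copp, C1, Q2R; simpl; apply Cx_ext; field. Qed.

Lemma sf3ctx_ok ti Sv f3 w : vden (mkenv ti Sv f3) (sf3ctx w) = f3ctx ti Sv w.
Proof.
  unfold sf3ctx, f3ctx. rewrite vden_scale. unfold sM1000. rewrite sMc_ok by lia. f_equal.
  destruct w as [|x [|y [|z [|u w]]]]; repeat match goal with q : pl |- _ => destruct q end;
  rewrite ?vden_scale, ?sden_m1, ?vden_bv; first [reflexivity | apply vden_zero].
Qed.

Inductive trie := TE | TL (v : sv) | TN (a b c d : trie).

Definition compat (prev : option pl) (x : pl) : bool :=
  match prev with None => true | Some y => obj_eqb (rgt (P y)) (lft (P x)) end.

Fixpoint mk_trie (f : list pl -> sv) (d : nat) (prev : option pl) : trie :=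
  match d with
  | O => TL (f [])
  | S d' =>
    TN (if compat prev Th then mk_trie (fun w => f (Th :: w)) d' (Some Th) else TE)
       (if compat prev Et then mk_trie (fun w => f (Et :: w)) d' (Some Et) else TE)
       (if compat prev Xi then mk_trie (fun w => f (Xi :: w)) d' (Some Xi) else TE)
       (if compat prev XiL then mk_trie (fun w => f (XiL :: w)) d' (Some XiL) else TE)
  end.

Fixpoint lookup (t : trie) (w : list pl) : sv :=
  match t, w with
  | TL v, [] => v
  | TN a b c d, x :: w' => lookup (match x with Th => a | Et => b | Xi => c | XiL => d end) w'
  | _, _ => svzero
  end.

Fixpoint cf (prev : option pl) (w : list pl) : bool :=
  match w with [] => true | x :: w' => (compat prev x && cf (Some x) w')%bool end.

Lemma cf_some y w : cf (Some y) w = composable (y :: w).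
Proof. revert y; induction w as [|x w IH]; intro y; simpl. reflexivity.
  rewrite IH. reflexivity. Qed.
Lemma cf_none w : cf None w = composable w.
Proof. destruct w. reflexivity. simpl. apply cf_some. Qed.

Lemma lookup_TE w : lookup TE w = svzero.
Proof. destruct w; reflexivity. Qed.

Lemma lookup_mk d : forall f prev w,
  lookup (mk_trie f d prev) w = if (Nat.eqb (length w) d && cf prev w)%bool then f w else svzero.
Proof.
  induction d as [|d IH]; intros f prev w.
  - destruct w; reflexivity.
  - destruct w as [|x w]. reflexivity.
    simpl. destruct x; destruct (compat prev _); simpl; rewrite ?IH, ?lookup_TE;
    try reflexivity; destruct (Nat.eqb (length w) d); reflexivity.
Qed.

Lemma lookup_mk_ok f d w : length w = d -> composable w = true -> lookup (mk_trie f d None) w = f w.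
Proof. intros H1 H2. rewrite lookup_mk, cf_none, H2, H1, Nat.eqb_refl. reflexivity. Qed.

Fixpoint fw (f : list pl -> bool) (d : nat) (prev : option pl) : bool :=
  match d with
  | O => f []
  | S d' =>
    ((if compat prev Th then fw (fun w => f (Th :: w)) d' (Some Th) else true) &&
     (if compat prev Et then fw (fun w => f (Et :: w)) d' (Some Et) else true) &&
     (if compat prev Xi then fw (fun w => f (Xi :: w)) d' (Some Xi) else true) &&
     (if compat prev XiL then fw (fun w => f (XiL :: w)) d' (Some XiL) else true))%bool
  end.

Lemma fw_ok d : forall f prev, fw f d prev = true -> forall w, length w = d -> cf prev w = true -> f w = true.
Proof.
  induction d as [|d IH]; intros f prev H w Hl Hc.
  - destruct w; [exact H| discriminate].
  - destruct w as [|x w]; [discriminate|]. simpl in Hl, Hc. injection Hl; intro Hl'.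
    apply andb_prop in Hc; destruct Hc as [Hc1 Hc2]. simpl in H.
    repeat rewrite andb_true_iff in H. destruct H as [[[H1 H2] H3] H4].
    destruct x; rewrite Hc1 in *;
    [apply (IH _ _ H1) | apply (IH _ _ H2) | apply (IH _ _ H3) | apply (IH _ _ H4)]; auto.
Qed.

Lemma fw_ok' f d : fw f d None = true -> forall w, length w = d -> composable w = true -> f w = true.
Proof. intros H w H1 H2. apply (fw_ok d f None H w H1). rewrite cf_none; auto. Qed.

Definition compsok (n : nat) : bool :=
  (forallb (fun comp => forallb (fun i => Nat.leb 1 i) comp && Nat.eqb (sumn comp) n) (comps n) &&
  Nat.eqb (length (filter (fun comp => Nat.eqb (length comp) n) (comps n))) 1)%bool.
Lemma compsok_all : forallb compsok (seq 1 8) = true.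
Proof. vm_compute. reflexivity. Qed.
Lemma compsok_n n : (1 <= n <= 8)%nat -> compsok n = true.
Proof. intro H. pose proof compsok_all as K. rewrite forallb_forall in K. apply K.
  apply in_seq. lia. Qed.
Lemma comps_prop n : (1 <= n <= 8)%nat -> forall comp, In comp (comps n) ->
  (forall i, In i comp -> (1 <= i)%nat) /\ sumn comp = n.
Proof.
  intros Hn comp Hin. pose proof (compsok_n n Hn) as K. unfold compsok in K.
  apply andb_prop in K. destruct K as [K _]. rewrite forallb_forall in K.
  specialize (K comp Hin). apply andb_prop in K. destruct K as [K1 K2].
  rewrite forallb_forall in K1. split. intros i Hi. apply Nat.leb_le; auto. apply Nat.eqb_eq; auto.
Qed.

Definition cut (mp : nat -> cochain) (n : nat) : nat -> cochain :=
  fun q => if Nat.ltb q n then mp q else fun _ => vzero.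

Lemma ones_of comp : (forall i, In i comp -> (1 <= i)%nat) -> sumn comp = length comp ->
  comp = repeat 1%nat (length comp).
Proof.
  induction comp as [|a c IH]; intros H1 H2. reflexivity.
  simpl in *. assert (1 <= a)%nat by auto. pose proof (len_le_sum c (fun i Hi => H1 i (or_intror Hi))).
  assert (a = 1%nat) by lia. subst. f_equal. apply IH; [now auto | lia].
Qed.

Lemma mor_exp_ones k : forall w D, mor_exp (repeat 1%nat k) w D = 0%nat.
Proof. induction k; intros; simpl; auto. rewrite IHk. lia. Qed.

Lemma args_ones f w : map (fun ij => opF f (fst ij) (map inj (snd ij)))
     (combine (repeat 1%nat (length w)) (blocks (repeat 1%nat (length w)) w)) = map inj w.
Proof. induction w; simpl; auto. rewrite IHw. reflexivity. Qed.

Lemma Csum_ifs {A} (p : A -> bool) X l :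
  Csum (map (fun x => if p x then X else C0) l) = Csum (map (fun _ => X) (filter p l)).
Proof. induction l; simpl. reflexivity. destruct (p a); simpl; rewrite IHl; ring. Qed.

Lemma mor_rhs_split f mp w c : composable w = true -> (3 <= length w <= 8)%nat ->
  mor_rhs f mp w c = Cadd (mor_rhs f (cut mp (length w)) w c) (mp (length w) w c).
Proof.
  intros Hw Hn. set (n := length w). unfold mor_rhs. rewrite !vsum_pt, !map_map.
  assert (K : forall comp, In comp (comps n) ->
     vscale (Csign (mor_exp comp w 0)) (opM mp (length comp) (map (fun ij => opF f (fst ij) (map inj (snd ij))) (combine comp (blocks comp w)))) c
     = Cadd (vscale (Csign (mor_exp comp w 0)) (opM (cut mp n) (length comp) (map (fun ij => opF f (fst ij) (map inj (snd ij))) (combine comp (blocks comp w)))) c)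
            (if Nat.eqb (length comp) n then mp n w c else C0)).
  { intros comp Hin. destruct (comps_prop n ltac:(lia) comp Hin) as [H1 H2].
    pose proof (len_le_sum comp H1) as Hle.
    destruct (Nat.eqb (length comp) n) eqn:E.
    - apply Nat.eqb_eq in E. assert (Hc : comp = repeat 1%nat n).
      { rewrite <- E. apply ones_of; auto. lia. }
      subst comp. rewrite repeat_length. unfold n. rewrite mor_exp_ones, args_ones.
      unfold vscale. simpl Csign.
      assert (Ez : opM (cut mp (length w)) (length w) (map inj w) c = C0).
      { destruct (length w) as [|[|[|k]]] eqn:El; try lia. simpl.
        unfold cut. rewrite Nat.ltb_irrefl. apply eval_zero. }
      assert (Em : opM mp (length w) (map inj w) c = mp (length w) w c).
      { destruct (length w) as [|[|[|k]]] eqn:El; try lia. simpl. rewrite <- El. apply eval_inj; auto. }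
      rewrite Ez, Em. change (Csign 0) with C1. ring.
    - apply Nat.eqb_neq in E. assert (length comp < n)%nat by lia.
      assert (Eq : opM (cut mp n) (length comp) = opM mp (length comp)).
      { extensionality vs. destruct (length comp) as [|[|[|k]]] eqn:El; try reflexivity.
        simpl. unfold cut. rewrite (proj2 (Nat.ltb_lt _ _) H). reflexivity. }
      rewrite Eq. ring. }
  change (comps (length w)) with (comps n). rewrite (map_ext_in _ _ _ K).
  assert (Sp : forall (F G : list nat -> Cx) l, Csum (map (fun x => Cadd (F x) (G x)) l) = Cadd (Csum (map F l)) (Csum (map G l))).
  { intros F G l; induction l; simpl. ring. rewrite IHl; ring. }
  rewrite Sp. f_equal. rewrite Csum_ifs.
  pose proof (compsok_n n ltac:(lia)) as Kc. unfold compsok in Kc. apply andb_prop in Kc.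
  destruct Kc as [_ Kc]. apply Nat.eqb_eq in Kc.
  destruct (filter (fun comp => Nat.eqb (length comp) n) (comps n)) as [|x [|y l]]; simpl in Kc; try lia.
  simpl. ring.
Qed.

Definition cutT (tabs : list trie) (n : nat) : nat -> list pl -> sv :=
  fun q => if Nat.ltb q n then lookup (nth q tabs TE) else fun _ => svzero.
Definition solve_word (sm sf : nat -> list pl -> sv) (tabs : list trie) (n : nat) (w : list pl) : sv :=
  svsub (smor_lhs sm sf w) (smor_rhs sf (cutT tabs n) w).
Fixpoint tbl (sm sf : nat -> list pl -> sv) (N : nat) : list trie :=
  match N with
  | O => [TE]
  | S N' => let L := tbl sm sf N' in
      L ++ [if Nat.ltb N 3 then TE else mk_trie (solve_word sm sf L N) N None]
  end.

Lemma tbl_length sm sf N : length (tbl sm sf N) = S N.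
Proof. induction N; simpl; auto. rewrite length_app, IHN. simpl. lia. Qed.

Lemma tbl_ok env m f mp sm sf :
  (forall q u, (3 <= q <= 8)%nat -> composable u = true -> length u = q -> vden env (sm q u) = m q u) ->
  (forall q u, q <> 1%nat -> composable u = true -> length u = q -> vden env (sf q u) = f q u) ->
  is_morphism m f mp ->
  forall N, (N <= 8)%nat -> forall q u, (3 <= q <= N)%nat -> composable u = true -> length u = q ->
    vden env (lookup (nth q (tbl sm sf N) TE) u) = mp q u.
Proof.
  intros Hm Hf Hmor N. induction N as [|N IH]; intros HN q u Hq Hu Hl. lia.
  cbn [tbl]. destruct (Nat.eq_dec q (S N)) as [->|Hne].
  - rewrite app_nth2 by (rewrite tbl_length; lia). rewrite tbl_length, Nat.sub_diag. cbn [nth].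
    destruct (Nat.ltb (S N) 3) eqn:E. apply Nat.ltb_lt in E; lia.
    rewrite lookup_mk_ok by auto. extensionality c. unfold solve_word. rewrite vden_sub.
    rewrite smor_lhs_ok with (m := m) (f := f); auto.
    2:{ intros q' u' H1 H2 H3 H4. apply Hm; auto. lia. }
    rewrite smor_rhs_ok with (f := f) (m' := cut mp (S N)); auto.
    + rewrite (Hmor u c Hu ltac:(lia)). rewrite mor_rhs_split by (auto; lia). rewrite Hl. ring.
    + intros. apply comps_prop; auto. lia.
    + intros q' u' H1 H2 H3 H4. unfold cutT, cut. destruct (Nat.ltb q' (S N)) eqn:E2.
      * apply Nat.ltb_lt in E2. apply IH; auto; lia.
      * apply vden_zero.
  - rewrite app_nth1 by (rewrite tbl_length; lia). apply IH; auto; lia.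
Qed.

Definition certs : list (list pl * bb * list (Q * list pl * bb)) := [
  ([Th;Et;Xi], IdO, []);
  ([Th;XiL;Et], IdO, [((1#3)%Q, [Th;Et;Th;XiL], (P Th)); ((-1#3)%Q, [Th;XiL;Et;Th], (P Th)); ((-2#3)%Q, [Th;XiL;XiL;Et], (P Xi)); ((-1#3)%Q, [Et;Th;Et;Th], IdL); ((-2#3)%Q, [Et;Th;XiL;Et], (P Et)); ((1#3)%Q, [Et;Xi;Th;XiL], (P XiL))]);
  ([Th;XiL;XiL], (P Th), [((-1#3)%Q, [Th;Et;Th;XiL], (P Th)); ((1#3)%Q, [Th;XiL;Et;Th], (P Th)); ((-1#3)%Q, [Th;XiL;XiL;Et], (P Xi)); ((1#3)%Q, [Et;Th;Et;Th], IdL); ((-1#3)%Q, [Et;Th;XiL;Et], (P Et)); ((-1#3)%Q, [Et;Xi;Th;XiL], (P XiL))]);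
  ([Et;Th;XiL], IdL, []);
  ([Et;Xi;Th], IdL, [((-2#3)%Q, [Th;Et;Th;XiL], (P Th)); ((-1#3)%Q, [Th;XiL;Et;Th], (P Th)); ((1#3)%Q, [Th;XiL;XiL;Et], (P Xi)); ((-1#3)%Q, [Et;Th;Et;Th], IdL); ((1#3)%Q, [Et;Th;XiL;Et], (P Et)); ((-2#3)%Q, [Et;Xi;Th;XiL], (P XiL))]);
  ([Et;Xi;Xi], (P Et), [((-1#3)%Q, [Th;Et;Th;XiL], (P Th)); ((1#3)%Q, [Th;XiL;Et;Th], (P Th)); ((-1#1)%Q, [Th;XiL;Et;Xi], (P Xi)); ((2#3)%Q, [Th;XiL;XiL;Et], (P Xi)); ((1#3)%Q, [Et;Th;Et;Th], IdL); ((-1#1)%Q, [Et;Th;Et;Xi], (P Et)); ((2#3)%Q, [Et;Th;XiL;Et], (P Et)); ((-1#3)%Q, [Et;Xi;Th;XiL], (P XiL))]);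
  ([Xi;Th;Et], IdO, [((1#1)%Q, [Th;Et;Th;Et], IdO); ((1#3)%Q, [Th;Et;Th;XiL], (P Th)); ((-1#3)%Q, [Th;XiL;Et;Th], (P Th)); ((-2#3)%Q, [Th;XiL;XiL;Et], (P Xi)); ((-1#3)%Q, [Et;Th;Et;Th], IdL); ((-2#3)%Q, [Et;Th;XiL;Et], (P Et)); ((1#3)%Q, [Et;Xi;Th;XiL], (P XiL))]);
  ([Xi;Th;XiL], (P Th), [((2#3)%Q, [Th;Et;Th;XiL], (P Th)); ((1#3)%Q, [Th;XiL;Et;Th], (P Th)); ((-1#3)%Q, [Th;XiL;XiL;Et], (P Xi)); ((1#3)%Q, [Et;Th;Et;Th], IdL); ((-1#3)%Q, [Et;Th;XiL;Et], (P Et)); ((-1#3)%Q, [Et;Xi;Th;XiL], (P XiL))]);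
  ([Xi;Xi;Th], (P Th), [((-2#3)%Q, [Th;Et;Th;XiL], (P Th)); ((1#1)%Q, [Th;Et;Xi;Th], (P Th)); ((-1#3)%Q, [Th;XiL;Et;Th], (P Th)); ((1#3)%Q, [Th;XiL;XiL;Et], (P Xi)); ((-1#3)%Q, [Et;Th;Et;Th], IdL); ((1#3)%Q, [Et;Th;XiL;Et], (P Et)); ((-2#3)%Q, [Et;Xi;Th;XiL], (P XiL))]);
  ([Xi;Xi;Xi], (P Xi), [((-1#3)%Q, [Th;Et;Th;XiL], (P Th)); ((1#1)%Q, [Th;Et;Xi;Xi], (P Xi)); ((1#3)%Q, [Th;XiL;Et;Th], (P Th)); ((-1#1)%Q, [Th;XiL;Et;Xi], (P Xi)); ((2#3)%Q, [Th;XiL;XiL;Et], (P Xi)); ((1#3)%Q, [Et;Th;Et;Th], IdL); ((-1#1)%Q, [Et;Th;Et;Xi], (P Et)); ((2#3)%Q, [Et;Th;XiL;Et], (P Et)); ((-1#3)%Q, [Et;Xi;Th;XiL], (P XiL))]);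
  ([XiL;Et;Th], IdL, [((-2#3)%Q, [Th;Et;Th;XiL], (P Th)); ((-1#3)%Q, [Th;XiL;Et;Th], (P Th)); ((1#3)%Q, [Th;XiL;XiL;Et], (P Xi)); ((2#3)%Q, [Et;Th;Et;Th], IdL); ((1#3)%Q, [Et;Th;XiL;Et], (P Et)); ((-2#3)%Q, [Et;Xi;Th;XiL], (P XiL))]);
  ([XiL;Et;Xi], (P Et), [((-1#3)%Q, [Th;Et;Th;XiL], (P Th)); ((1#3)%Q, [Th;XiL;Et;Th], (P Th)); ((-1#1)%Q, [Th;XiL;Et;Xi], (P Xi)); ((2#3)%Q, [Th;XiL;XiL;Et], (P Xi)); ((1#3)%Q, [Et;Th;Et;Th], IdL); ((2#3)%Q, [Et;Th;XiL;Et], (P Et)); ((-1#3)%Q, [Et;Xi;Th;XiL], (P XiL))]);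
  ([XiL;XiL;Et], (P Et), [((1#3)%Q, [Th;Et;Th;XiL], (P Th)); ((-1#3)%Q, [Th;XiL;Et;Th], (P Th)); ((-2#3)%Q, [Th;XiL;XiL;Et], (P Xi)); ((-1#3)%Q, [Et;Th;Et;Th], IdL); ((1#3)%Q, [Et;Th;XiL;Et], (P Et)); ((1#3)%Q, [Et;Xi;Th;XiL], (P XiL))]);
  ([XiL;XiL;XiL], (P XiL), [((-1#3)%Q, [Th;Et;Th;XiL], (P Th)); ((1#3)%Q, [Th;XiL;Et;Th], (P Th)); ((-1#3)%Q, [Th;XiL;XiL;Et], (P Xi)); ((1#3)%Q, [Et;Th;Et;Th], IdL); ((-1#3)%Q, [Et;Th;XiL;Et], (P Et)); ((1#1)%Q, [Et;Th;XiL;XiL], (P XiL)); ((-1#3)%Q, [Et;Xi;Th;XiL], (P XiL))])].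
Definition psi6_data : list (list pl * bb * list (Q * nat * list positive)) := [
  ([Th;Et;Xi;Xi;Xi], IdO, [((1#1)%Q, 0%nat, [100%positive;100%positive]); ((2#1)%Q, 2%nat, [2%positive;100%positive])]);
  ([Th;XiL;Et;Xi;Xi], IdO, [((-1#1)%Q, 2%nat, [2%positive;100%positive])]);
  ([Th;XiL;XiL;XiL;XiL], (P Th), [((-1#1)%Q, 0%nat, [101%positive;101%positive]); ((-2#1)%Q, 2%nat, [2%positive;101%positive])]);
  ([Et;Th;XiL;XiL;XiL], IdL, [((1#1)%Q, 0%nat, [101%positive;101%positive]); ((2#1)%Q, 2%nat, [2%positive;101%positive])]);
  ([Et;Xi;Th;XiL;XiL], IdL, [((-1#1)%Q, 2%nat, [2%positive;101%positive])]);
  ([Et;Xi;Xi;Xi;Xi], (P Et), [((-1#1)%Q, 0%nat, [100%positive;100%positive]); ((-2#1)%Q, 2%nat, [2%positive;100%positive])]);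
  ([Xi;Th;Et;Xi;Xi], IdO, [((-1#1)%Q, 0%nat, [100%positive;100%positive]); ((-2#1)%Q, 2%nat, [2%positive;100%positive])]);
  ([Xi;Th;XiL;XiL;XiL], (P Th), [((1#1)%Q, 2%nat, [2%positive;101%positive])]);
  ([Xi;Xi;Th;XiL;Et], IdO, [((1#1)%Q, 2%nat, [2%positive;100%positive])]);
  ([Xi;Xi;Th;XiL;XiL], (P Th), [((1#1)%Q, 0%nat, [100%positive;101%positive]); ((1#1)%Q, 2%nat, [2%positive;100%positive]); ((1#1)%Q, 2%nat, [2%positive;101%positive])]);
  ([Xi;Xi;Xi;Th;XiL], (P Th), [((-1#1)%Q, 2%nat, [2%positive;100%positive])]);
  ([XiL;Et;Th;XiL;XiL], IdL, [((-1#1)%Q, 0%nat, [101%positive;101%positive]); ((-2#1)%Q, 2%nat, [2%positive;101%positive])]);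
  ([XiL;Et;Xi;Xi;Xi], (P Et), [((1#1)%Q, 2%nat, [2%positive;100%positive])]);
  ([XiL;XiL;Et;Xi;Th], IdL, [((1#1)%Q, 2%nat, [2%positive;101%positive])]);
  ([XiL;XiL;Et;Xi;Xi], (P Et), [((1#1)%Q, 0%nat, [100%positive;101%positive]); ((1#1)%Q, 2%nat, [2%positive;100%positive]); ((1#1)%Q, 2%nat, [2%positive;101%positive])]);
  ([XiL;XiL;XiL;Et;Xi], (P Et), [((-1#1)%Q, 2%nat, [2%positive;101%positive])])].
Definition psi8_data : list (list pl * bb * list (Q * nat * list positive)) := [
  ([Th;XiL;Et;Xi;Xi;Xi;Xi], IdO, [((-2#1)%Q, 4%nat, [2%positive;2%positive;100%positive]); ((-1#1)%Q, 2%nat, [2%positive;100%positive;100%positive])]);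
  ([Th;XiL;XiL;Et;Xi;Xi;Xi], IdO, [((1#1)%Q, 4%nat, [2%positive;2%positive;100%positive])]);
  ([Et;Xi;Th;XiL;XiL;XiL;XiL], IdL, [((-1#1)%Q, 2%nat, [2%positive;101%positive;101%positive]); ((-2#1)%Q, 4%nat, [2%positive;2%positive;101%positive])]);
  ([Et;Xi;Xi;Th;XiL;XiL;XiL], IdL, [((1#1)%Q, 4%nat, [2%positive;2%positive;101%positive])]);
  ([Xi;Th;XiL;XiL;Et;Xi;Xi], IdO, [((1#1)%Q, 4%nat, [2%positive;2%positive;100%positive])]);
  ([Xi;Th;XiL;XiL;XiL;XiL;XiL], (P Th), [((1#1)%Q, 2%nat, [2%positive;101%positive;101%positive]); ((2#1)%Q, 4%nat, [2%positive;2%positive;101%positive])]);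
  ([Xi;Xi;Th;Et;Xi;Xi;Xi], IdO, [((-3#1)%Q, 4%nat, [2%positive;2%positive;100%positive]); ((-1#1)%Q, 0%nat, [100%positive;100%positive;100%positive]); ((-3#1)%Q, 2%nat, [2%positive;100%positive;100%positive])]);
  ([Xi;Xi;Th;XiL;Et;Xi;Xi], IdO, [((4#1)%Q, 4%nat, [2%positive;2%positive;100%positive]); ((2#1)%Q, 2%nat, [2%positive;100%positive;100%positive])]);
  ([Xi;Xi;Th;XiL;XiL;Et;Xi], IdO, [((-1#1)%Q, 4%nat, [2%positive;2%positive;100%positive])]);
  ([Xi;Xi;Th;XiL;XiL;XiL;XiL], (P Th), [((1#1)%Q, 2%nat, [2%positive;101%positive;101%positive]); ((1#1)%Q, 0%nat, [100%positive;101%positive;101%positive]); ((1#1)%Q, 4%nat, [2%positive;2%positive;101%positive]); ((1#1)%Q, 4%nat, [2%positive;2%positive;100%positive]); ((2#1)%Q, 2%nat, [2%positive;100%positive;101%positive])]);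
  ([Xi;Xi;Xi;Th;Et;Xi;Xi], IdO, [((3#1)%Q, 4%nat, [2%positive;2%positive;100%positive]); ((1#1)%Q, 0%nat, [100%positive;100%positive;100%positive]); ((3#1)%Q, 2%nat, [2%positive;100%positive;100%positive])]);
  ([Xi;Xi;Xi;Th;XiL;XiL;Et], IdO, [((-1#1)%Q, 4%nat, [2%positive;2%positive;100%positive])]);
  ([Xi;Xi;Xi;Th;XiL;XiL;XiL], (P Th), [((-2#1)%Q, 4%nat, [2%positive;2%positive;101%positive]); ((-2#1)%Q, 4%nat, [2%positive;2%positive;100%positive]); ((-2#1)%Q, 2%nat, [2%positive;100%positive;101%positive])]);
  ([Xi;Xi;Xi;Xi;Th;XiL;Et], IdO, [((-2#1)%Q, 4%nat, [2%positive;2%positive;100%positive]); ((-1#1)%Q, 2%nat, [2%positive;100%positive;100%positive])]);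
  ([Xi;Xi;Xi;Xi;Th;XiL;XiL], (P Th), [((-1#1)%Q, 0%nat, [100%positive;100%positive;101%positive]); ((-1#1)%Q, 4%nat, [2%positive;2%positive;101%positive]); ((-1#1)%Q, 4%nat, [2%positive;2%positive;100%positive]); ((-1#1)%Q, 2%nat, [2%positive;100%positive;100%positive]); ((-2#1)%Q, 2%nat, [2%positive;100%positive;101%positive])]);
  ([Xi;Xi;Xi;Xi;Xi;Th;XiL], (P Th), [((2#1)%Q, 4%nat, [2%positive;2%positive;100%positive]); ((1#1)%Q, 2%nat, [2%positive;100%positive;100%positive])]);
  ([XiL;Et;Xi;Xi;Th;XiL;XiL], IdL, [((1#1)%Q, 4%nat, [2%positive;2%positive;101%positive])]);
  ([XiL;Et;Xi;Xi;Xi;Xi;Xi], (P Et), [((2#1)%Q, 4%nat, [2%positive;2%positive;100%positive]); ((1#1)%Q, 2%nat, [2%positive;100%positive;100%positive])]);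
  ([XiL;XiL;Et;Th;XiL;XiL;XiL], IdL, [((-1#1)%Q, 0%nat, [101%positive;101%positive;101%positive]); ((-3#1)%Q, 2%nat, [2%positive;101%positive;101%positive]); ((-3#1)%Q, 4%nat, [2%positive;2%positive;101%positive])]);
  ([XiL;XiL;Et;Xi;Th;XiL;XiL], IdL, [((2#1)%Q, 2%nat, [2%positive;101%positive;101%positive]); ((4#1)%Q, 4%nat, [2%positive;2%positive;101%positive])]);
  ([XiL;XiL;Et;Xi;Xi;Th;XiL], IdL, [((-1#1)%Q, 4%nat, [2%positive;2%positive;101%positive])]);
  ([XiL;XiL;Et;Xi;Xi;Xi;Xi], (P Et), [((1#1)%Q, 0%nat, [100%positive;100%positive;101%positive]); ((1#1)%Q, 4%nat, [2%positive;2%positive;101%positive]); ((1#1)%Q, 4%nat, [2%positive;2%positive;100%positive]); ((1#1)%Q, 2%nat, [2%positive;100%positive;100%positive]); ((2#1)%Q, 2%nat, [2%positive;100%positive;101%positive])]);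
  ([XiL;XiL;XiL;Et;Th;XiL;XiL], IdL, [((1#1)%Q, 0%nat, [101%positive;101%positive;101%positive]); ((3#1)%Q, 2%nat, [2%positive;101%positive;101%positive]); ((3#1)%Q, 4%nat, [2%positive;2%positive;101%positive])]);
  ([XiL;XiL;XiL;Et;Xi;Xi;Th], IdL, [((-1#1)%Q, 4%nat, [2%positive;2%positive;101%positive])]);
  ([XiL;XiL;XiL;Et;Xi;Xi;Xi], (P Et), [((-2#1)%Q, 4%nat, [2%positive;2%positive;101%positive]); ((-2#1)%Q, 4%nat, [2%positive;2%positive;100%positive]); ((-2#1)%Q, 2%nat, [2%positive;100%positive;101%positive])]);
  ([XiL;XiL;XiL;XiL;Et;Xi;Th], IdL, [((-1#1)%Q, 2%nat, [2%positive;101%positive;101%positive]); ((-2#1)%Q, 4%nat, [2%positive;2%positive;101%positive])]);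
  ([XiL;XiL;XiL;XiL;Et;Xi;Xi], (P Et), [((-1#1)%Q, 2%nat, [2%positive;101%positive;101%positive]); ((-1#1)%Q, 0%nat, [100%positive;101%positive;101%positive]); ((-1#1)%Q, 4%nat, [2%positive;2%positive;101%positive]); ((-1#1)%Q, 4%nat, [2%positive;2%positive;100%positive]); ((-2#1)%Q, 2%nat, [2%positive;100%positive;101%positive])]);
  ([XiL;XiL;XiL;XiL;XiL;Et;Xi], (P Et), [((1#1)%Q, 2%nat, [2%positive;101%positive;101%positive]); ((2#1)%Q, 4%nat, [2%positive;2%positive;101%positive])])].

Definition slam : sc := ssub (satom 8) (smul (spow st 2) (satom 2)).
Definition smu : sc := ssub (satom 11) (smul (spow st 2) (satom 2)).
Definition atomsc (p : positive) : sc :=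
  if Pos.eqb p 100 then slam else if Pos.eqb p 101 then smu else satom p.
Definition mono_sc (m : Q * nat * list positive) : sc :=
  let '(q, k, l) := m in
  smul (sconst q) (smul (spow st k) (fold_right (fun p acc => smul (atomsc p) acc) sone l)).
Definition poly_sc (l : list (Q * nat * list positive)) : sc :=
  fold_right (fun m acc => sadd (mono_sc m) acc) szero l.
Fixpoint find_entry {A} (d : A) (l : list (list pl * bb * A)) (u : list pl) (c : bb) : A :=
  match l with
  | [] => d
  | (u', c', x) :: l => if (word_eqb u u' && bb_eqb c c')%bool then x else find_entry d l u c
  end.
Definition psif (data : list (list pl * bb * list (Q * nat * list positive))) (u : list pl) : sv :=
  smk (fun c => poly_sc (find_entry [] data u c)).

Definition allowedb (D : Z) (u : list pl) (c : bb) : bool :=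
  match u with
  | [] => false
  | x :: w => (obj_eqb (lft c) (lft (P x)) && obj_eqb (rgt c) (rgt (P (last w x))) &&
               Z.eqb (degb c) (Z.of_nat (degsum u) + D))%bool
  end.

Fixpoint idx (l : list (list pl * bb)) (k : positive) (u : list pl) (c : bb) : positive :=
  match l with
  | [] => 1%positive
  | (u', c') :: l => if (word_eqb u u' && bb_eqb c c')%bool then k else idx l (Pos.succ k) u c
  end.
Definition sf3gen (u : list pl) : sv :=
  smk (fun c => if allowedb (-2) u c then satom (idx flist 8 u c) else szero).

Definition k1 (w : list pl) : sv :=
  match w with
  | [Th; Et; Xi] => sbv IdO
  | [Et; Xi; Xi] => svscale (sconst (-1)%Q) (sbv (P Et))
  | [Xi; Th; Et] => svscale (sconst (-1)%Q) (sbv IdO)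
  | [Xi; Xi; Th] => sbv (P Th)
  | _ => svzero end.
Definition k2 (w : list pl) : sv :=
  match w with
  | [Th; XiL; XiL] => svscale (sconst (-1)%Q) (sbv (P Th))
  | [Et; Th; XiL] => sbv IdL
  | [XiL; Et; Th] => svscale (sconst (-1)%Q) (sbv IdL)
  | [XiL; XiL; Et] => sbv (P Et)
  | _ => svzero end.
Definition sf3p (u : list pl) : sv :=
  svadd (sf3ctx u) (svadd (svscale slam (k1 u)) (svscale smu (k2 u))).

Definition combo (l : list (Q * list pl * bb)) (T : trie) : sc :=
  fold_right (fun e acc => let '(q, w, c) := e in
     sadd (if (composable w && Nat.eqb (length w) 4)%bool then smul (sconst q) (sget (lookup T w) c) else szero) acc)
   szero l.

Definition polishT : list trie := map (fun q => mk_trie (spolish2 q) q None) (seq 0 9).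
Definition smP (PT : list trie) (q : nat) (u : list pl) : sv := lookup (nth q PT TE) u.
Definition sstrict3 (sf3 : list pl -> sv) : nat -> list pl -> sv :=
  fun n => if Nat.eqb n 3 then sf3 else fun _ => svzero.

Definition chk_cob (N : nat) (A B : list trie) (Pt : trie) : bool :=
  fw (fun w => forallb (fun c => seqb (ssub (sget (lookup (nth N A TE) w) c) (sget (lookup (nth N B TE) w) c))
                                     (sget (shoch (lookup Pt) w) c)) bbs) N None.
Definition chk_psi (f : list pl -> sv) (d : nat) (D : Z) : bool :=
  fw (fun u => forallb (fun c => (siszero (sget (f u) c) || allowedb D u c)%bool) bbs) d None.
Definition chk_f3 (T4 : trie) : bool :=
  fw (fun u => forallb (fun c => if allowedb (-2) u c
        then seqb (ssub (sget (sf3gen u) c) (sget (sf3p u) c)) (combo (find_entry [] certs u c) T4)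
        else siszero (sget (sf3p u) c)) bbs) 3 None.

Definition P6 : trie := mk_trie (psif psi6_data) 5 None.
Definition P8 : trie := mk_trie (psif psi8_data) 7 None.

Definition BIG : bool :=
  let PT := polishT in
  let T4 := nth 4 (tbl (smP PT) (sstrict3 sf3gen) 4) TE in
  let A := tbl (smP PT) (sstrict3 sf3ctx) 8 in
  let B := tbl (smP PT) (sstrict3 sf3p) 8 in
  (chk_f3 T4 && chk_cob 6 A B P6 && chk_cob 8 A B P8 &&
   chk_psi (psif psi6_data) 5 (-4) && chk_psi (psif psi8_data) 7 (-6))%bool.

Definition BIGf (T4 : trie) (A B : list trie) : bool :=
  (chk_f3 T4 && chk_cob 6 A B P6 && chk_cob 8 A B P8 &&
   chk_psi (psif psi6_data) 5 (-4) && chk_psi (psif psi8_data) 7 (-6))%bool.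


Lemma obj_eqb_refl o : obj_eqb o o = true.
Proof. destruct o; reflexivity. Qed.
Lemma obj_eqb_eq a b : obj_eqb a b = true -> a = b.
Proof. destruct a, b; simpl; congruence. Qed.

Lemma zero_outside (phi : cochain) D u c : bimod phi -> homog phi D -> composable u = true ->
  u <> [] -> allowedb D u c = false -> phi u c = C0.
Proof.
  intros Hb Hh Hc Hne E. destruct u as [|x w]; [congruence|].
  destruct (classic (phi (x :: w) c = C0)) as [H|H]; auto. exfalso.
  destruct (Hb x w c Hc H) as [E1 E2]. pose proof (Hh (x :: w) c Hc H) as E3.
  unfold allowedb in E. rewrite E1, E2, E3, !obj_eqb_refl, Z.eqb_refl in E. discriminate.
Qed.

Lemma allowed_sound D x w c : allowedb D (x :: w) c = true ->
  lft c = lft (P x) /\ rgt c = rgt (P (last w x)) /\ degb c = (Z.of_nat (degsum (x :: w)) + D)%Z.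
Proof.
  unfold allowedb. intro H. repeat rewrite andb_true_iff in H. destruct H as [[H1 H2] H3].
  split; [apply obj_eqb_eq; auto|split; [apply obj_eqb_eq; auto| apply Z.eqb_eq; auto]].
Qed.

Lemma in_bbs c : In c bbs.
Proof. destruct c as [| |[]]; simpl; tauto. Qed.

Lemma fw_forall f d u c : fw (fun u => forallb (f u) bbs) d None = true ->
  length u = d -> composable u = true -> f u c = true.
Proof. intros H H1 H2. pose proof (fw_ok' _ d H u H1 H2) as K. rewrite forallb_forall in K. apply K, in_bbs. Qed.

Section Main.
Variables (ti : R) (Sv : nat -> nat -> Cx) (f3 : cochain).
Hypothesis (hb : bimod f3) (hh : homog f3 (-2)%Z).
Local Notation env := (mkenv ti Sv f3).

Lemma sf3gen_ok u : composable u = true -> length u = 3%nat -> vden env (sf3gen u) = f3 u.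
Proof.
  intros Hc Hl. extensionality c. unfold vden, sf3gen. rewrite sget_mk.
  destruct (allowedb (-2) u c) eqn:E.
  - rewrite sden_atom. destruct u as [|x [|y [|z [|]]]]; try discriminate Hl.
    destruct x, y, z; try discriminate Hc; destruct c as [| |[]]; try discriminate E; reflexivity.
  - rewrite sden_zero. symmetry. apply (zero_outside f3 (-2)%Z); auto.
    intro; subst; discriminate.
Qed.

Lemma polishT_nth q : (q <= 8)%nat -> nth q polishT TE = mk_trie (spolish2 q) q None.
Proof.
  intro H. do 9 (destruct q as [|q]; [reflexivity|]). lia.
Qed.

Lemma HmP q u : (3 <= q <= 8)%nat -> composable u = true -> length u = q ->
  vden env (smP polishT q u) = polishchuk ti Sv q u.
Proof.
  intros Hq Hc Hl. unfold smP. rewrite polishT_nth by lia. rewrite lookup_mk_ok by auto.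
  extensionality c. unfold vden. rewrite spolish2_eq.
  rewrite <- (spolish'_ok ti Sv f3 q u) by lia. reflexivity.
Qed.

Lemma Hstrict (sf3 : list pl -> sv) (g : cochain) :
  (forall u, composable u = true -> length u = 3%nat -> vden env (sf3 u) = g u) ->
  forall q u, q <> 1%nat -> composable u = true -> length u = q ->
    vden env (sstrict3 sf3 q u) = strict3 g q u.
Proof.
  intros H q u _ Hc Hl. unfold sstrict3, strict3. destruct (Nat.eqb q 3) eqn:E.
  apply Nat.eqb_eq in E. subst. apply H; auto. apply vden_zero.
Qed.

Lemma combo_zero l T : (forall w c, composable w = true -> length w = 4%nat -> sden env (sget (lookup T w) c) = C0) ->
  sden env (combo l T) = C0.
Proof.
  intro H. induction l as [|[[q w] c] l IH]. exact (sden_zero _).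
  unfold combo; cbn [fold_right]; fold (combo l T). rewrite sden_add, IH. destruct (composable w && Nat.eqb (length w) 4)%bool eqn:E.
  - apply andb_prop in E. destruct E as [E1 E2]. apply Nat.eqb_eq in E2.
    rewrite sden_mul, H by auto. ring.
  - rewrite sden_zero. ring.
Qed.
End Main.

Lemma Csub_eq0 a b : Csub a b = C0 -> a = b.
Proof. intro H. transitivity (Cadd (Csub a b) b). ring. rewrite H. ring. Qed.

Lemma cob_generic env (mp mpp : nat -> cochain) (A B : list trie) (N d : nat)
  (data : list (list pl * bb * list (Q * nat * list positive))) :
  (3 <= N)%nat -> d = (N - 1)%nat ->
  (forall u, composable u = true -> length u = N -> vden env (lookup (nth N A TE) u) = mp N u) ->
  (forall u, composable u = true -> length u = N -> vden env (lookup (nth N B TE) u) = mpp N u) ->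
  chk_cob N A B (mk_trie (psif data) d None) = true ->
  chk_psi (psif data) d (2 - Z.of_nat N)%Z = true ->
  coboundary N (fun w c => Csub (mp N w c) (mpp N w c)).
Proof.
  intros HN Hd HA HB Hcob Hpsi.
  exists (fun u => vden env (lookup (mk_trie (psif data) d None) u)).
  assert (Key : forall u c, vden env (lookup (mk_trie (psif data) d None) u) c <> C0 ->
     length u = d /\ composable u = true /\ allowedb (2 - Z.of_nat N)%Z u c = true).
  { intros u c Hne. rewrite lookup_mk in Hne.
    destruct (Nat.eqb (length u) d && cf None u)%bool eqn:E;
      [|rewrite vden_zero in Hne; contradiction].
    apply andb_prop in E; destruct E as [E1 E2]. apply Nat.eqb_eq in E1. rewrite cf_none in E2.
    pose proof (fw_forall (fun u c => (siszero (sget (psif data u) c) || allowedb (2 - Z.of_nat N)%Z u c)%bool)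
      d u c Hpsi E1 E2) as K. cbv beta in K. apply orb_prop in K. destruct K as [K|K].
    - exfalso. apply Hne. unfold vden. apply sden_iszero; auto.
    - auto. }
  split; [|split].
  - intros x w c Hc Hne. destruct (Key _ _ Hne) as [_ [_ K]].
    destruct (allowed_sound _ _ _ _ K) as [? [? ?]]; auto.
  - intros w c Hc Hne. destruct (Key _ _ Hne) as [E1 [_ K]].
    destruct w as [|x w]. simpl in E1. lia.
    destruct (allowed_sound _ _ _ _ K) as [? [? ?]]; auto.
  - intros w c Hc Hl. rewrite <- HA, <- HB by auto.
    unfold chk_cob in Hcob.
    pose proof (fw_forall (fun w c => seqb (ssub (sget (lookup (nth N A TE) w) c) (sget (lookup (nth N B TE) w) c))
                                     (sget (shoch (lookup (mk_trie (psif data) d None)) w) c)) N w c Hcob Hl Hc) as K.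
    cbv beta in K. apply (sden_eqb env) in K. rewrite sden_sub in K. unfold vden. rewrite K.
    exact (shoch_ok env _ _ w (fun u => eq_refl) c).
Qed.

Lemma Hf3c_true : fw (fun u => forallb (fun c => if allowedb (-2) u c
        then seqb (ssub (sget (sf3gen u) c) (sget (sf3p u) c))
                  (combo (find_entry [] certs u c) (nth 4 (tbl (smP polishT) (sstrict3 sf3gen) 4) TE))
        else siszero (sget (sf3p u) c)) bbs) 3 None = true.
Proof. vm_compute. reflexivity. Qed.
Lemma H6_true : chk_cob 6 (tbl (smP polishT) (sstrict3 sf3ctx) 6) (tbl (smP polishT) (sstrict3 sf3p) 6)
  (mk_trie (psif psi6_data) 5 None) = true.
Proof. vm_compute. reflexivity. Qed.
Lemma H8_true : chk_cob 8 (tbl (smP polishT) (sstrict3 sf3ctx) 8) (tbl (smP polishT) (sstrict3 sf3p) 8)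
  (mk_trie (psif psi8_data) 7 None) = true.
Proof. vm_compute. reflexivity. Qed.
Lemma Hp6_true : chk_psi (psif psi6_data) 5 (2 - Z.of_nat 6)%Z = true.
Proof. vm_compute. reflexivity. Qed.
Lemma Hp8_true : chk_psi (psif psi8_data) 7 (2 - Z.of_nat 8)%Z = true.
Proof. vm_compute. reflexivity. Qed.

Theorem mainTheorem15
  (tr ti : R) (hti : 0 < ti)
  (S : nat -> nat -> Cx)
  (hS : forall m n : nat, is_lattice_sum tr ti m n (S m n))
  (* m' = f * m for the specific f of the context *)
  (mp : nat -> cochain)
  (hmp : is_morphism (polishchuk ti S) (strict3 (f3ctx ti S)) mp)
  (* an arbitrary strict isomorphism f' = (id, 0, f'_3, 0, ...) *)
  (f3' : cochain) (hf3b : bimod f3') (hf3d : homog f3' (-2)%Z)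
  (* m'' = f' * m *)
  (mpp : nat -> cochain)
  (hmpp : is_morphism (polishchuk ti S) (strict3 f3') mpp)
  (h4 : forall w c, composable w = true -> length w = 4%nat -> mpp 4%nat w c = C0)
  (hodd : forall (k : nat) w c, (1 <= k)%nat -> composable w = true ->
            length w = (2 * k + 1)%nat -> mpp (2 * k + 1)%nat w c = C0) :
  coboundary 6 (fun w c => Csub (mp 6%nat w c) (mpp 6%nat w c)) /\
  coboundary 8 (fun w c => Csub (mp 8%nat w c) (mpp 8%nat w c)).
Proof.
  assert (HA : forall N q u, (N <= 8)%nat -> (3 <= q <= N)%nat -> composable u = true -> length u = q ->
     vden (mkenv ti S f3') (lookup (nth q (tbl (smP polishT) (sstrict3 sf3ctx) N) TE) u) = mp q u).
  { intros N q u HN Hq Hc Hl.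
    exact (tbl_ok (mkenv ti S f3') _ _ mp _ _ (HmP ti S f3')
      (Hstrict ti S f3' sf3ctx (f3ctx ti S) (fun u _ _ => sf3ctx_ok ti S f3' u)) hmp N HN q u Hq Hc Hl). }
  assert (HT4 : forall w c, composable w = true -> length w = 4%nat ->
     sden (mkenv ti S f3') (sget (lookup (nth 4 (tbl (smP polishT) (sstrict3 sf3gen) 4) TE) w) c) = C0).
  { intros w c Hc Hl.
    change (sden (mkenv ti S f3') (sget (lookup (nth 4 (tbl (smP polishT) (sstrict3 sf3gen) 4) TE) w) c))
      with (vden (mkenv ti S f3') (lookup (nth 4 (tbl (smP polishT) (sstrict3 sf3gen) 4) TE) w) c).
    rewrite (tbl_ok (mkenv ti S f3') _ _ mpp _ _ (HmP ti S f3')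
      (Hstrict ti S f3' sf3gen f3' (sf3gen_ok ti S f3' hf3b hf3d)) hmpp 4 ltac:(lia) 4 w ltac:(lia) Hc Hl).
    exact (h4 w c Hc Hl). }
  assert (Hp : forall u, composable u = true -> length u = 3%nat -> vden (mkenv ti S f3') (sf3p u) = f3' u).
  { intros u Hc Hl. extensionality c.
    pose proof (fw_forall (fun u c => if allowedb (-2) u c
        then seqb (ssub (sget (sf3gen u) c) (sget (sf3p u) c))
                  (combo (find_entry [] certs u c) (nth 4 (tbl (smP polishT) (sstrict3 sf3gen) 4) TE))
        else siszero (sget (sf3p u) c)) 3 u c Hf3c_true Hl Hc) as K.
    cbv beta in K. destruct (allowedb (-2) u c) eqn:E.
    - apply (sden_eqb (mkenv ti S f3')) in K.
      rewrite sden_sub, (combo_zero ti S f3' _ _ HT4) in K.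
      apply Csub_eq0 in K. unfold vden. rewrite <- K.
      change (sden (mkenv ti S f3') (sget (sf3gen u) c)) with (vden (mkenv ti S f3') (sf3gen u) c).
      rewrite (sf3gen_ok ti S f3' hf3b hf3d u Hc Hl). reflexivity.
    - unfold vden. rewrite (sden_iszero (mkenv ti S f3') _ K). symmetry.
      apply (zero_outside f3' (-2)%Z u c hf3b hf3d Hc).
      + intro Hu; rewrite Hu in Hl; discriminate Hl.
      + exact E. }
  assert (HBt : forall N q u, (N <= 8)%nat -> (3 <= q <= N)%nat -> composable u = true -> length u = q ->
     vden (mkenv ti S f3') (lookup (nth q (tbl (smP polishT) (sstrict3 sf3p) N) TE) u) = mpp q u).
  { intros N q u HN Hq Hc Hl.
    exact (tbl_ok (mkenv ti S f3') _ _ mpp _ _ (HmP ti S f3')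
      (Hstrict ti S f3' sf3p f3' Hp) hmpp N HN q u Hq Hc Hl). }
  split.
  - exact (cob_generic (mkenv ti S f3') mp mpp (tbl (smP polishT) (sstrict3 sf3ctx) 6)
      (tbl (smP polishT) (sstrict3 sf3p) 6) 6 5 psi6_data ltac:(lia) eq_refl
      (fun u Hc Hl => HA 6%nat 6%nat u ltac:(lia) ltac:(lia) Hc Hl)
      (fun u Hc Hl => HBt 6%nat 6%nat u ltac:(lia) ltac:(lia) Hc Hl) H6_true Hp6_true).
  - exact (cob_generic (mkenv ti S f3') mp mpp (tbl (smP polishT) (sstrict3 sf3ctx) 8)
      (tbl (smP polishT) (sstrict3 sf3p) 8) 8 7 psi8_data ltac:(lia) eq_refl
      (fun u Hc Hl => HA 8%nat 8%nat u ltac:(lia) ltac:(lia) Hc Hl)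
      (fun u Hc Hl => HBt 8%nat 8%nat u ltac:(lia) ltac:(lia) Hc Hl) H8_true Hp8_true).
Qed.
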